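(* Let $\Phi(u,v)=P(u)(1-v)F(u,uv)$ for $(u,v)\in\mathbb{D}^2$. Then $\Phi$ satisfies, for $u\ne0$, the inhomogeneous linear PDE $$\frac{\partial\Phi}{\partial u}-\frac{u-q}{P(u)}\,v(1-v)\frac{\partial\Phi}{\partial v}+\mathcal{L}(u,v)=0,$$ where $$\mathcal{L}(u,v)=(1-v)\frac{L(u,uv)}{u}=(1-v)\left(\frac{v}{1-u}+(1+v)E(q,uv)-v(s+1+\rho-uv)\frac{\partial E}{\partial v}(q,uv)\right).$$
   Context: Queueing model: an $M^{[X]}/M/1$ processor-sharing queue with Poisson batch arrivals of rate $\rho>0$, exponential job services of mean $1$, unit capacity shared equally among all jobs present, all random quantities independent; batch sizes geometric $\mathbb{P}(B=b)=(1-q)q^{b-1}$, $b\ge1$, with $q\in(0,1)$, $\rho+q<1$. For $n\ge0,b\ge1$, $\Omega_{n,b}$ is the sojourn time of a tagged batch (arrival to departure of its last job) given $n$ jobs present at its arrival and batch size $b$; $e^*_{n,b}(s)=\mathbb{E}(e^{-s\Omega_{n,b}})$, $\Re(s)\ge0$ fixed and suppressed from notation. $\mathbb{D}$ is the open unit disk; $E(u,v)=\sum_{n\ge0}\sum_{b\ge1}e^*_{n,b}(s)u^nv^b$; $F(u,v)=\frac{E(u,v)-E(q,v)}{u-q}$ for $u\ne q$, $F(q,v)=\frac{\partial E}{\partial u}(q,v)$; $P(u)=u^2-(s+1+\rho+q)u+sq+\rho+q$; $L(u,v)=\frac{v}{1-u}+(u+v)E(q,v)-v(s+1+\rho-v)\frac{\partial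 E}{\partial v}(q,v)$. *)

(* Defs.v *)
From Stdlib Require Import Reals ClassicalEpsilon.
From Coquelicot Require Import Coquelicot.
Open Scope R_scope.

(* the value of a convergent complex series (0 if it does not converge) *)
Definition CSeries (a : nat -> C) : C :=
  epsilon (inhabits (RtoC 0))
    (fun l : C => is_series (K := C_AbsRing) (V := C_NormedModule) a l).

(* complex derivative of f : C -> C at z (0 if f is not C-differentiable at z) *)
Definition CDeriv (f : C -> C) (z : C) : C :=
  epsilon (inhabits (RtoC 0))
    (fun l : C => is_derive (K := C_AbsRing) (V := C_NormedModule) f z l).

Definition Cex_derive (f : C -> C) (z : C) : Prop :=
  exists l : C, is_derive (K := C_AbsRing) (V := C_NormedModule) f z l.

Fixpoint Cpow (z : C) (n : nat) : C :=
  match n with O => RtoC 1 | S m => Cmult z (Cpow z m) end.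

Definition inD (z : C) : Prop := Cmod z < 1.

(* ---------- the M^[X]/M/1-PS model: sojourn time of a tagged batch ----------
   State of the tagged batch: (n, b) = n other jobs present, b jobs of the
   tagged batch still present.  In any state with b >= 1 the total event rate
   is rho + 1 (Poisson arrivals, rate rho, of a geometric batch joining the
   "other" jobs; total service capacity 1 shared equally among the n+b jobs,
   exponential services of mean 1, so a tagged job leaves at rate b/(n+b) and
   another job at rate n/(n+b)).  Hence Omega_{n,b} is the sum of N iid
   Exp(rho+1) holding times, N the number of jumps of the embedded jump chain
   until b = 0, independent of the holding times.
   [absp rho q k n b] = P(N = k) started from (n,b). *)
Fixpoint absp (rho q : R) (k n b : nat) : R :=
  match k with
  | O => match b with O => 1 | S _ => 0 end
  | S k' =>
    match b with
    | O => 0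
    | S b' =>
        rho / (rho + 1) *
          Series (fun j : nat => (1 - q) * q ^ j * absp rho q k' (n + S j) b)
        + / (rho + 1) *
          (INR n / INR (n + b) * absp rho q k' (Nat.pred n) b
           + INR b / INR (n + b) * absp rho q k' n b')
    end
  end.

(* e*_{n,b}(s) = E(exp(-s Omega_{n,b})) = sum_k P(N=k) ((rho+1)/(s+rho+1))^k *)
Definition estar (rho q : R) (s : C) (n b : nat) : C :=
  CSeries (fun k : nat =>
    Cmult (RtoC (absp rho q k n b))
          (Cpow (Cdiv (RtoC (rho + 1)) (Cplus s (RtoC (rho + 1)))) k)).

Definition Egen (rho q : R) (s : C) (u v : C) : C :=
  CSeries (fun n : nat =>
    CSeries (fun b' : nat =>
      Cmult (estar rho q s n (S b')) (Cmult (Cpow u n) (Cpow v (S b'))))).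

Definition dEu (rho q : R) (s : C) (u v : C) : C :=
  CDeriv (fun x => Egen rho q s x v) u.
Definition dEv (rho q : R) (s : C) (u v : C) : C :=
  CDeriv (fun y => Egen rho q s u y) v.

Definition Ffun (rho q : R) (s : C) (u v : C) : C :=
  match Req_EM_T (Re u) q, Req_EM_T (Im u) 0 with
  | left _, left _ => dEu rho q s (RtoC q) v
  | _, _ => Cdiv (Cminus (Egen rho q s u v) (Egen rho q s (RtoC q) v))
                 (Cminus u (RtoC q))
  end.

Definition Ppol (rho q : R) (s : C) (u : C) : C :=
  Cplus (Cminus (Cmult u u) (Cmult (Cplus s (RtoC (1 + rho + q))) u))
        (Cplus (Cmult s (RtoC q)) (RtoC (rho + q))).

Definition Lfun (rho q : R) (s : C) (u v : C) : C :=
  Cminus (Cplus (Cdiv v (Cminus (RtoC 1) u))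
                (Cmult (Cplus u v) (Egen rho q s (RtoC q) v)))
         (Cmult (Cmult v (Cminus (Cplus s (RtoC (1 + rho))) v))
                (dEv rho q s (RtoC q) v)).

Definition Phi (rho q : R) (s : C) (u v : C) : C :=
  Cmult (Cmult (Ppol rho q s u) (Cminus (RtoC 1) v)) (Ffun rho q s u (Cmult u v)).

Definition calL (rho q : R) (s : C) (u v : C) : C :=
  Cdiv (Cmult (Cminus (RtoC 1) v) (Lfun rho q s u (Cmult u v))) u.

(* Main.v *)
Require Import Defs.
From Stdlib Require Import Reals Lra Lia ClassicalEpsilon FunctionalExtensionality.
From Coquelicot Require Import Coquelicot.
Open Scope R_scope.

Definition CIS (a : nat -> C) (l : C) : Prop :=
  is_series (K := C_AbsRing) (V := C_NormedModule) a l.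

Lemma CIS_unique a l1 l2 : CIS a l1 -> CIS a l2 -> l1 = l2.
Proof.
  intros H1 H2. exact (filterlim_locally_unique (F := eventually) _ _ _ H1 H2).
Qed.

Lemma CSeries_correct a l : CIS a l -> CSeries a = l.
Proof.
  intros H. unfold CSeries.
  pose proof (epsilon_spec (inhabits (RtoC 0)) (fun l => CIS a l) (ex_intro _ l H)) as H'.
  exact (CIS_unique _ _ _ H' H).
Qed.

Lemma CIS_ext a b l : (forall n, a n = b n) -> CIS a l -> CIS b l.
Proof. intros; eapply is_series_ext; eauto. Qed.

Lemma CIS_plus a b la lb : CIS a la -> CIS b lb -> CIS (fun n => Cplus (a n) (b n)) (Cplus la lb).
Proof. intros Ha Hb. exact (is_series_plus _ _ _ _ Ha Hb). Qed.

Lemma CIS_minus a b la lb : CIS a la -> CIS b lb -> CIS (fun n => Cminus (a n) (b n)) (Cminus la lb).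
Proof. intros Ha Hb. exact (is_series_minus _ _ _ _ Ha Hb). Qed.

Lemma CIS_scal c a l : CIS a l -> CIS (fun n => Cmult c (a n)) (Cmult c l).
Proof. intros Ha. exact (is_series_scal c _ _ Ha). Qed.


Lemma sum_n_zeroC N : sum_n (G:=C_AbelianMonoid) (fun _ => RtoC 0) N = RtoC 0.
Proof.
  induction N. - rewrite sum_O. reflexivity.
  - rewrite sum_Sn, IHN. change (Cplus 0 0 = 0)%C. ring.
Qed.

Lemma CIS_zero : CIS (fun _ => RtoC 0) (RtoC 0).
Proof.
  unfold CIS, is_series.
  apply filterlim_ext with (fun _ => RtoC 0).
  - intros N. symmetry. apply sum_n_zeroC.
  - apply filterlim_const.
Qed.

Lemma CIS_shift a l : CIS a l -> a 0%nat = RtoC 0 -> CIS (fun n => a (S n)) l.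
Proof.
  intros H H0. apply is_series_incr_1. rewrite H0.
  match goal with |- is_series _ ?x =>
    assert (E : x = l) by (change (Cplus l (RtoC 0) = l); ring); rewrite E end.
  exact H.
Qed.

Lemma CIS_unshift a l : CIS (fun n => a (S n)) l -> a 0%nat = RtoC 0 -> CIS a l.
Proof.
  intros H H0. apply is_series_decr_1. rewrite H0.
  match goal with |- is_series _ ?x =>
    assert (E : x = l) by (change (Cplus l (Copp (RtoC 0)) = l); ring); rewrite E end.
  exact H.
Qed.

Lemma CIS_cons a l : CIS (fun n => a (S n)) l -> CIS a (Cplus (a 0%nat) l).
Proof.
  intros H. apply is_series_decr_1.
  match goal with |- is_series _ ?x =>
    assert (E : x = l) by (change (Cplus (Cplus (a 0%nat) l) (Copp (a 0%nat)) = l); ring); rewrite E end.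
  exact H.
Qed.

Lemma Cmod_sum_n a b N : (forall n, Cmod (a n) <= b n) ->
  Cmod (sum_n (G:=C_AbelianMonoid) a N) <= sum_n b N.
Proof.
  intros Hb. induction N.
  - rewrite !sum_O. auto.
  - rewrite !sum_Sn. eapply Rle_trans. apply Cmod_triangle.
    change (plus (sum_n b N) (b (S N))) with (sum_n b N + b (S N)).
    specialize (Hb (S N)). lra.
Qed.

Lemma CIS_norm_le a l b L : CIS a l -> is_series b L ->
  (forall n, Cmod (a n) <= b n) -> Cmod l <= L.
Proof.
  intros Ha Hb Hab.
  assert (H1 : is_lim_seq (fun N => Cmod (sum_n (G:=C_AbelianMonoid) a N)) (Cmod l)).
  { exact (filterlim_comp _ _ _ _ _ _ _ _ Ha (filterlim_norm (K:=C_AbsRing) (V:=C_NormedModule) l)). }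
  assert (H2 : is_lim_seq (sum_n b) L) by exact Hb.
  pose proof (is_lim_seq_le _ _ _ _ (fun N => Cmod_sum_n a b N Hab) H1 H2) as H.
  exact H.
Qed.

Lemma CIS_ex a b : (forall n, Cmod (a n) <= b n) -> ex_series b -> exists l, CIS a l.
Proof.
  intros Hab Hb.
  destruct (ex_series_le (K:=C_AbsRing) (V:=C_CompleteNormedModule) a b Hab Hb) as [l Hl].
  exists l. exact Hl.
Qed.

Lemma lim_inv_S : is_lim_seq (fun n => / INR (S n)) 0.
Proof.
  assert (H : is_lim_seq (fun n => INR (S n)) p_infty).
  { apply (is_lim_seq_incr_1 INR p_infty). exact is_lim_seq_INR. }
  pose proof (is_lim_seq_inv _ _ H) as H2. simpl in H2.
  apply H2. discriminate.
Qed.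

Lemma is_lim_seq_eq u (l l' : R) : is_lim_seq u l -> l = l' -> is_lim_seq u l'.
Proof. intros H E; subst; auto. Qed.

Lemma lim_ratio_pow p : is_lim_seq (fun n => (1 + / INR (S n)) ^ p) 1.
Proof.
  induction p.
  - simpl. apply is_lim_seq_const.
  - simpl. apply (is_lim_seq_eq _ (1 * 1)). 2: ring.
    apply is_lim_seq_mult'; auto.
    apply (is_lim_seq_eq _ (1 + 0)). 2: ring.
    apply is_lim_seq_plus'. apply is_lim_seq_const. exact lim_inv_S.
Qed.

Lemma W_ex p r : 0 < r < 1 -> ex_series (fun n => INR (S n) ^ p * r ^ n).
Proof.
  intros Hr.
  assert (Hpos : forall n, 0 < INR (S n) ^ p * r ^ n).
  { intros n. apply Rmult_lt_0_compat; apply pow_lt; [apply lt_0_INR; lia | lra]. }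
  apply ex_series_ext with (fun n => Rabs (INR (S n) ^ p * r ^ n)).
  { intros n. apply Rabs_pos_eq. apply Rlt_le, Hpos. }
  apply ex_series_DAlembert with r. lra.
  { intros n. apply Rgt_not_eq, Hpos. }
  apply is_lim_seq_ext with (fun n => (1 + / INR (S n)) ^ p * r).
  { intros n. rewrite Rabs_pos_eq.
    - rewrite S_INR with (n := S n). 
      assert (0 < INR (S n)) by (apply lt_0_INR; lia).
      replace (INR (S n) + 1) with ((1 + / INR (S n)) * INR (S n)) by (field; lra).
      rewrite Rpow_mult_distr. simpl pow at 4. field.
      split. apply Rgt_not_eq, pow_lt; lra. apply Rgt_not_eq, pow_lt; lra.
    - apply Rlt_le. apply Rdiv_lt_0_compat; apply Hpos. }
  apply (is_lim_seq_eq _ (1 * r)). 2: ring.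
  apply is_lim_seq_mult'. apply lim_ratio_pow. apply is_lim_seq_const.
Qed.

Lemma Cpow_CC z n : Defs.Cpow z n = Cpow z n.
Proof. induction n; [reflexivity|]. simpl. rewrite IHn. reflexivity. Qed.

Lemma Cmod_Cpow z n : Cmod (Cpow z n) = Cmod z ^ n.
Proof. apply Cmod_pow. Qed.

Lemma Cpow_add z n m : Cpow z (n + m) = Cmult (Cpow z n) (Cpow z m).
Proof. induction n; simpl. ring. rewrite IHn. ring. Qed.

Lemma Clim_of_bound (f : nat -> C) l e : is_lim_seq e 0 ->
  (forall N, Cmod (Cminus (f N) l) <= e N) ->
  filterlim f eventually (locally l).
Proof.
  intros He Hb. apply (filterlim_locally_ball_norm (K:=C_AbsRing) (U:=C_NormedModule)).
  intros eps. apply is_lim_seq_spec in He. destruct (He eps) as [N HN].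
  exists N. intros n Hn. specialize (HN n Hn). unfold ball_norm.
  change (Cmod (Cminus (f n) l) < eps). specialize (Hb n).
  rewrite Rminus_0_r in HN. pose proof (Rle_abs (e n)). lra.
Qed.

Lemma sum_n_geomC u N : Cmult (Cminus (RtoC 1) u) (sum_n (G:=C_AbelianMonoid) (Cpow u) N)
  = Cminus (RtoC 1) (Cpow u (S N)).
Proof.
  induction N.
  - rewrite sum_O. simpl. ring.
  - rewrite sum_Sn. change (plus (sum_n (Cpow u) N) (Cpow u (S N))) with
      (Cplus (sum_n (G:=C_AbelianMonoid) (Cpow u) N) (Cpow u (S N))).
    transitivity (Cplus (Cmult (Cminus (RtoC 1) u) (sum_n (G:=C_AbelianMonoid) (Cpow u) N))
      (Cmult (Cminus (RtoC 1) u) (Cpow u (S N)))). ring.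
    rewrite IHN. simpl. ring.
Qed.

Lemma CIS_geom u : Cmod u < 1 -> CIS (Cpow u) (Cinv (Cminus (RtoC 1) u)).
Proof.
  intros Hu.
  assert (Hnz : Cminus (RtoC 1) u <> RtoC 0).
  { intros E. assert (u = RtoC 1).
    { transitivity (Cminus (RtoC 1) (Cminus (RtoC 1) u)). ring. rewrite E. ring. }
    subst. rewrite Cmod_1 in Hu. lra. }
  assert (Hm : 0 < Cmod (Cminus (RtoC 1) u)) by (apply Cmod_gt_0; auto).
  apply Clim_of_bound with (fun N => Cmod u ^ (S N) / Cmod (Cminus (RtoC 1) u)).
  - apply (is_lim_seq_incr_1 (fun N => Cmod u ^ N / Cmod (Cminus (RtoC 1) u)) 0).
    apply (is_lim_seq_eq _ (0 * / Cmod (Cminus (RtoC 1) u))). 2: ring.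
    apply is_lim_seq_mult'. apply is_lim_seq_geom. rewrite Rabs_pos_eq. auto. apply Cmod_ge_0.
    apply is_lim_seq_const.
  - intros N.
    assert (E : Cminus (sum_n (G:=C_AbelianMonoid) (Cpow u) N) (Cinv (Cminus (RtoC 1) u))
      = Cdiv (Copp (Cpow u (S N))) (Cminus (RtoC 1) u)).
    { assert (S1 : sum_n (G:=C_AbelianMonoid) (Cpow u) N =
        Cdiv (Cminus (RtoC 1) (Cpow u (S N))) (Cminus (RtoC 1) u)).
      { pose proof (sum_n_geomC u N) as G.
        assert (K : forall X Y : C, Cmult (Cminus (RtoC 1) u) X = Y -> X = Cdiv Y (Cminus (RtoC 1) u)).
        { intros X Y HX. rewrite <- HX. field. auto. }
        apply K. exact G. }
      rewrite S1. field. auto. }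
    match goal with |- Cmod ?x <= _ => assert (E' : x = Cdiv (Copp (Cpow u (S N))) (Cminus (RtoC 1) u)) by exact E; rewrite E' end.
    rewrite Cmod_div; auto. rewrite <- Cmod_Cpow.
    unfold Rdiv. apply Rmult_le_compat_r. left; apply Rinv_0_lt_compat; auto.
    rewrite Cmod_opp. lra.
Qed.

Definition CisD (f : C -> C) (z l : C) : Prop :=
  is_derive (K := C_AbsRing) (V := C_NormedModule) f z l.

Lemma deriv_of_taylor (f : C -> C) x0 l M eps : 0 < eps ->
  (forall y, Cmod (Cminus y x0) < eps ->
     Cmod (Cminus (Cminus (f y) (f x0)) (Cmult (Cminus y x0) l)) <= M * (Cmod (Cminus y x0))^2) ->
  CisD f x0 l.
Proof.
  intros Heps H. unfold CisD, is_derive, filterdiff. split.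
  - apply is_linear_scal_l.
  - intros x Hx. apply (is_filter_lim_locally_unique (K:=C_AbsRing) (V:=AbsRing_NormedModule C_AbsRing)) in Hx. subst x.
    intros e. apply (locally_norm_le_locally (K:=C_AbsRing) (V:=AbsRing_NormedModule C_AbsRing)).
    set (M' := Rmax M 0 + 1).
    assert (HM' : 0 < M') by (unfold M'; pose proof (Rmax_r M 0); lra).
    assert (He : 0 < Rmin eps (e / M')).
    { apply Rmin_pos; auto. apply Rdiv_lt_0_compat; auto. apply cond_pos. }
    exists (mkposreal _ He). intros y Hy. unfold ball_norm in Hy. simpl in Hy.
    change (Cmod (Cminus (Cminus (f y) (f x0)) (Cmult (Cminus y x0) l)) <= e * Cmod (Cminus y x0)).
    change (Cmod (Cminus y x0) < Rmin eps (e / M')) in Hy.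
    assert (H1 : Cmod (Cminus y x0) < eps) by (pose proof (Rmin_l eps (e/M')); lra).
    assert (H2 : Cmod (Cminus y x0) < e / M') by (pose proof (Rmin_r eps (e/M')); lra).
    specialize (H y H1). set (d := Cmod (Cminus y x0)) in *.
    assert (Hd : 0 <= d) by apply Cmod_ge_0.
    eapply Rle_trans. apply H.
    assert (M * d ^ 2 <= M' * d * d).
    { unfold M'. pose proof (Rmax_l M 0). simpl. nra. }
    assert (M' * d <= e).
    { apply Rmult_lt_compat_l with (r := M') in H2; auto.
      replace (M' * (e / M')) with (pos e) in H2 by (field; lra). lra. }
    nra.
Qed.

Lemma CisD_unique f x l1 l2 : CisD f x l1 -> CisD f x l2 -> l1 = l2.
Proof.
  intros [_ H1] [_ H2].
  specialize (H1 x (fun P HP => HP)). specialize (H2 x (fun P HP => HP)).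
  destruct (Req_dec (Cmod (Cminus l1 l2)) 0) as [E|E].
  { apply Cmod_eq_0 in E. transitivity (Cplus (Cminus l1 l2) l2). ring. rewrite E. ring. }
  assert (Hp : 0 < Cmod (Cminus l1 l2) / 4).
  { pose proof (Cmod_ge_0 (Cminus l1 l2)). lra. }
  set (e := mkposreal _ Hp).
  specialize (H1 e). specialize (H2 e).
  pose proof (filter_and _ _ H1 H2) as H3.
  apply (locally_le_locally_norm (K:=C_AbsRing) (V:=AbsRing_NormedModule C_AbsRing)) in H3. destruct H3 as [d Hd].
  set (y := Cplus x (RtoC (d / 2))).
  assert (Hy : ball_norm x d y).
  { unfold ball_norm. change (Cmod (Cminus y x) < d). unfold y.
    replace (Cminus (Cplus x (RtoC (d/2))) x) with (RtoC (d/2)) by ring.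
    rewrite Cmod_R. rewrite Rabs_pos_eq. pose proof (cond_pos d); lra.
    pose proof (cond_pos d); lra. }
  destruct (Hd y Hy) as [A1 A2]. simpl in A1, A2.
  change (Cmod (Cminus (Cminus (f y) (f x)) (Cmult (Cminus y x) l1)) <= e * Cmod (Cminus y x)) in A1.
  change (Cmod (Cminus (Cminus (f y) (f x)) (Cmult (Cminus y x) l2)) <= e * Cmod (Cminus y x)) in A2.
  assert (Eyx : Cminus y x = RtoC (d/2)) by (unfold y; ring).
  rewrite Eyx in A1, A2.
  assert (Hd2 : Cmod (RtoC (d/2)) = d/2).
  { rewrite Cmod_R. rewrite Rabs_pos_eq. auto. pose proof (cond_pos d); lra. }
  assert (K : Cmod (Cmult (RtoC (d/2)) (Cminus l1 l2)) <= 2 * e * (d/2)).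
  { replace (Cmult (RtoC (d/2)) (Cminus l1 l2)) with
      (Cminus (Cminus (Cminus (f y) (f x)) (Cmult (RtoC (d/2)) l2))
              (Cminus (Cminus (f y) (f x)) (Cmult (RtoC (d/2)) l1))) by ring.
    eapply Rle_trans. unfold Cminus at 1. apply Cmod_triangle. rewrite Cmod_opp.
    rewrite Hd2 in A1, A2. lra. }
  rewrite Cmod_mult, Hd2 in K. simpl in K. unfold e in K; simpl in K.
  pose proof (cond_pos d). nra.
Qed.

Lemma CDeriv_correct f z l : CisD f z l -> CDeriv f z = l.
Proof.
  intros H. unfold CDeriv.
  pose proof (epsilon_spec (inhabits (RtoC 0)) (fun l => CisD f z l) (ex_intro _ l H)) as H'.
  exact (CisD_unique _ _ _ _ H' H).
Qed.

Definition Wt (p : nat) (r : R) (n : nat) : R := INR (S n) ^ p * r ^ n.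
Definition SW (p : nat) (r : R) : R := Series (Wt p r).
Definition D2 (a : nat -> nat -> C) : C := CSeries (fun n => CSeries (a n)).
Definition Dbound (a : nat -> nat -> C) (K : R) (p : nat) (r : R) : Prop :=
  forall n m, Cmod (a n m) <= K * Wt p r n * Wt p r m.

Lemma Wt_pos p r n : 0 < r -> 0 < Wt p r n.
Proof. intros. unfold Wt. apply Rmult_lt_0_compat; apply pow_lt; auto. apply lt_0_INR; lia. Qed.

Lemma Wt_is p r : 0 < r < 1 -> is_series (Wt p r) (SW p r).
Proof. intros. apply Series_correct. apply W_ex; auto. Qed.

Lemma Series_ge_partial a : ex_series a -> (forall n, 0 <= a n) ->
  forall N, sum_n a N <= Series a.
Proof.
  intros He Hp N. apply (is_lim_seq_incr_compare (sum_n a)).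
  - apply Series_correct in He. exact He.
  - intros n. rewrite sum_Sn. specialize (Hp (S n)). unfold plus; simpl. lra.
Qed.

Lemma Series_nonneg a : ex_series a -> (forall n, 0 <= a n) -> 0 <= Series a.
Proof.
  intros He Hp. eapply Rle_trans. 2: apply (Series_ge_partial a He Hp 0).
  rewrite sum_O. auto.
Qed.

Lemma SW_pos p r : 0 < r < 1 -> 0 <= SW p r.
Proof.
  intros Hr. apply Series_nonneg. apply W_ex; auto.
  intros n; apply Rlt_le, Wt_pos; lra.
Qed.

Lemma ex_series_Rscal c a : ex_series a -> ex_series (fun n => c * a n).
Proof. intros H. apply (ex_series_scal_l c a) in H. exact H. Qed.

Lemma is_series_Rscal c a l : is_series a l -> is_series (fun n => c * a n) (c * l).
Proof. intros H. apply (is_series_scal_l c a) in H. exact H. Qed.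

Lemma D2_conv a K p r : 0 < r < 1 -> Dbound a K p r ->
  (forall n, CIS (a n) (CSeries (a n))) /\
  (forall n, Cmod (CSeries (a n)) <= K * Wt p r n * SW p r) /\
  CIS (fun n => CSeries (a n)) (D2 a) /\
  Cmod (D2 a) <= K * SW p r * SW p r.
Proof.
  intros Hr Hb.
  assert (Hin : forall n, CIS (a n) (CSeries (a n))).
  { intros n. destruct (CIS_ex (a n) (fun m => K * Wt p r n * Wt p r m)) as [l Hl].
    - intros m. apply Hb.
    - apply ex_series_Rscal. apply W_ex; auto.
    - rewrite (CSeries_correct _ _ Hl). auto. }
  assert (Hinb : forall n, Cmod (CSeries (a n)) <= K * Wt p r n * SW p r).
  { intros n. apply (CIS_norm_le (a n) _ (fun m => K * Wt p r n * Wt p r m)).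
    - apply Hin.
    - apply (is_series_Rscal (K * Wt p r n)). apply Wt_is; auto.
    - intros m; apply Hb. }
  assert (Hout : CIS (fun n => CSeries (a n)) (D2 a)).
  { destruct (CIS_ex (fun n => CSeries (a n)) (fun n => K * SW p r * Wt p r n)) as [l Hl].
    - intros n. specialize (Hinb n). lra.
    - apply ex_series_Rscal. apply W_ex; auto.
    - unfold D2. rewrite (CSeries_correct _ _ Hl). auto. }
  repeat split; auto.
  apply (CIS_norm_le (fun n => CSeries (a n)) _ (fun n => K * SW p r * Wt p r n)); auto.
  - apply (is_series_Rscal (K * SW p r)). apply Wt_is; auto.
  - intros n. specialize (Hinb n). lra.
Qed.

Lemma D2_ext a b : (forall n m, a n m = b n m) -> D2 a = D2 b.
Proof.
  intros H. assert (a = b) by (apply functional_extensionality; intros n;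
    apply functional_extensionality; intros m; apply H). subst; auto.
Qed.

Lemma D2_plus a b K1 K2 p r : 0 < r < 1 -> Dbound a K1 p r -> Dbound b K2 p r ->
  D2 (fun n m => Cplus (a n m) (b n m)) = Cplus (D2 a) (D2 b).
Proof.
  intros Hr Ha Hb.
  destruct (D2_conv a K1 p r Hr Ha) as [Ia [_ [Oa _]]].
  destruct (D2_conv b K2 p r Hr Hb) as [Ib [_ [Ob _]]].
  unfold D2 at 1.
  assert (E : (fun n => CSeries (fun m => Cplus (a n m) (b n m))) =
              (fun n => Cplus (CSeries (a n)) (CSeries (b n)))).
  { apply functional_extensionality. intros n. apply CSeries_correct.
    apply CIS_plus; auto. }
  rewrite E. apply CSeries_correct. apply CIS_plus; auto.
Qed.

Lemma D2_scal c a K p r : 0 < r < 1 -> Dbound a K p r ->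
  D2 (fun n m => Cmult c (a n m)) = Cmult c (D2 a).
Proof.
  intros Hr Ha.
  destruct (D2_conv a K p r Hr Ha) as [Ia [_ [Oa _]]].
  unfold D2 at 1.
  assert (E : (fun n => CSeries (fun m => Cmult c (a n m))) =
              (fun n => Cmult c (CSeries (a n)))).
  { apply functional_extensionality. intros n. apply CSeries_correct.
    apply CIS_scal; auto. }
  rewrite E. apply CSeries_correct. apply CIS_scal; auto.
Qed.

Lemma D2_minus a b K1 K2 p r : 0 < r < 1 -> Dbound a K1 p r -> Dbound b K2 p r ->
  D2 (fun n m => Cminus (a n m) (b n m)) = Cminus (D2 a) (D2 b).
Proof.
  intros Hr Ha Hb.
  destruct (D2_conv a K1 p r Hr Ha) as [Ia [_ [Oa _]]].
  destruct (D2_conv b K2 p r Hr Hb) as [Ib [_ [Ob _]]].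
  unfold D2 at 1.
  assert (E : (fun n => CSeries (fun m => Cminus (a n m) (b n m))) =
              (fun n => Cminus (CSeries (a n)) (CSeries (b n)))).
  { apply functional_extensionality. intros n. apply CSeries_correct.
    apply CIS_minus; auto. }
  rewrite E. apply CSeries_correct. apply CIS_minus; auto.
Qed.

Lemma Wt_mono p p' r n : (p <= p')%nat -> 0 < r -> Wt p r n <= Wt p' r n.
Proof.
  intros Hp Hr. unfold Wt. apply Rmult_le_compat_r. apply Rlt_le, pow_lt; auto.
  apply Rle_pow; auto. rewrite S_INR. pose proof (pos_INR n). lra.
Qed.

Lemma Dbound_mono a K p p' r : (p <= p')%nat -> 0 < r -> 0 <= K -> Dbound a K p r -> Dbound a K p' r.
Proof.
  intros Hp Hr HK H n m. eapply Rle_trans. apply H.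
  pose proof (Wt_mono p p' r n Hp Hr). pose proof (Wt_mono p p' r m Hp Hr).
  pose proof (Wt_pos p r n Hr). pose proof (Wt_pos p r m Hr).
  rewrite !Rmult_assoc. apply Rmult_le_compat_l; auto.
  apply Rmult_le_compat; lra.
Qed.

Lemma Dbound_K a K K' p r : K <= K' -> 0 < r -> Dbound a K p r -> Dbound a K' p r.
Proof.
  intros HK Hr H n m. eapply Rle_trans. apply H.
  pose proof (Wt_pos p r n Hr). pose proof (Wt_pos p r m Hr).
  apply Rmult_le_compat_r. lra. apply Rmult_le_compat_r; lra.
Qed.

Definition CB (c : nat -> nat -> C) (K : R) (p : nat) : Prop :=
  0 <= K /\ forall n m, Cmod (c n m) <= K * INR (S n) ^ p * INR (S m) ^ p.

Definition DS (c : nat -> nat -> C) (u v : C) : C :=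
  D2 (fun n m => (c n m * (u ^ n * v ^ m))%C).
Definition DSu (c : nat -> nat -> C) (u v : C) : C :=
  D2 (fun n m => (c n m * (INR n * u ^ (pred n) * v ^ m))%C).
Definition DSv (c : nat -> nat -> C) (u v : C) : C :=
  D2 (fun n m => (c n m * (u ^ n * (INR m * v ^ (pred m))))%C).

Lemma Cmod_pow_le x r n : Cmod x <= r -> Cmod (x ^ n)%C <= r ^ n.
Proof.
  intros H. rewrite Cmod_pow. apply pow_incr. split; auto. apply Cmod_ge_0.
Qed.

Lemma pow_pred_le x r n : 0 < r <= 1 -> Cmod x <= r -> r * Cmod (x ^ (pred n))%C <= r ^ n.
Proof.
  intros Hr Hx. destruct n as [|n].
  - simpl. rewrite Cmod_1. lra.
  - simpl. apply Rmult_le_compat_l. lra. apply Cmod_pow_le; auto.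
Qed.

Lemma INRS_ge1 n : 1 <= INR (S n).
Proof. rewrite S_INR. pose proof (pos_INR n). lra. Qed.

Lemma INRS_pow_pos n p : 0 < INR (S n) ^ p.
Proof. apply pow_lt. pose proof (INRS_ge1 n). lra. Qed.

Lemma INRS_pow_mono n p : INR (S n) ^ p <= INR (S n) ^ S p.
Proof.
  change (INR (S n) ^ S p) with (INR (S n) * INR (S n) ^ p).
  pose proof (INRS_ge1 n). pose proof (INRS_pow_pos n p).
  rewrite <- (Rmult_1_l (INR (S n) ^ p)) at 1. apply Rmult_le_compat_r; lra.
Qed.

Lemma DS_terms_bound c K p r u v : CB c K p -> 0 < r -> Cmod u <= r -> Cmod v <= r ->
  Dbound (fun n m => (c n m * (u ^ n * v ^ m))%C) K p r.
Proof.
  intros [HK Hc] Hr Hu Hv n m. unfold Wt.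
  rewrite !Cmod_mult. pose proof (Cmod_pow_le u r n Hu). pose proof (Cmod_pow_le v r m Hv).
  pose proof (Hc n m). pose proof (INRS_pow_pos n p). pose proof (INRS_pow_pos m p).
  pose proof (Cmod_ge_0 (c n m)). pose proof (Cmod_ge_0 (u ^ n)%C). pose proof (Cmod_ge_0 (v ^ m)%C).
  replace (K * (INR (S n) ^ p * r ^ n) * (INR (S m) ^ p * r ^ m)) with
    ((K * INR (S n) ^ p * INR (S m) ^ p) * (r ^ n * r ^ m)) by ring.
  apply Rmult_le_compat; auto. apply Rmult_le_pos; auto.
  apply Rmult_le_compat; auto.
Qed.

Lemma DSu_terms_bound c K p r u v : CB c K p -> 0 < r <= 1 -> Cmod u <= r -> Cmod v <= r ->
  Dbound (fun n m => (c n m * (INR n * u ^ (pred n) * v ^ m))%C) (K / r) (S p) r.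
Proof.
  intros [HK Hc] Hr Hu Hv n m. unfold Wt.
  rewrite !Cmod_mult, Cmod_R, Rabs_pos_eq by apply pos_INR.
  pose proof (pow_pred_le u r n Hr Hu). pose proof (Cmod_pow_le v r m Hv).
  pose proof (Hc n m). pose proof (INRS_pow_pos n p). pose proof (INRS_pow_pos m p).
  pose proof (INRS_pow_mono m p).
  pose proof (Cmod_ge_0 (c n m)). pose proof (Cmod_ge_0 (u ^ pred n)%C). pose proof (Cmod_ge_0 (v ^ m)%C).
  assert (HnS : INR n <= INR (S n)) by (rewrite S_INR; lra).
  pose proof (pos_INR n).
  assert (A : INR n * Cmod (u ^ pred n)%C <= INR (S n) * r ^ n / r).
  { apply Rmult_le_reg_l with r. lra. field_simplify. 2: lra.
    replace (r * INR n * Cmod (u ^ pred n)%C) with (INR n * (r * Cmod (u ^ pred n)%C)) by ring.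
    apply Rmult_le_compat; auto. apply Rmult_le_pos; lra. }
  replace (K / r * (INR (S n) ^ S p * r ^ n) * (INR (S m) ^ S p * r ^ m)) with
    ((K * INR (S n) ^ p * INR (S m) ^ S p) * ((INR (S n) * r ^ n / r) * r ^ m)) by (change (INR (S n) ^ S p) with (INR (S n) * INR (S n) ^ p); change (INR (S m) ^ S p) with (INR (S m) * INR (S m) ^ p); field; lra).
  apply Rmult_le_compat; auto. 
  - apply Rmult_le_pos; auto. apply Rmult_le_pos; auto.
  - eapply Rle_trans. apply H1. apply Rmult_le_compat_l. 
    apply Rmult_le_pos; auto. lra. auto.
  - apply Rmult_le_compat; auto. apply Rmult_le_pos; auto.
Qed.

Lemma DSv_terms_bound c K p r u v : CB c K p -> 0 < r <= 1 -> Cmod u <= r -> Cmod v <= r ->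
  Dbound (fun n m => (c n m * (u ^ n * (INR m * v ^ (pred m))))%C) (K / r) (S p) r.
Proof.
  intros [HK Hc] Hr Hu Hv n m. unfold Wt.
  rewrite !Cmod_mult, Cmod_R, Rabs_pos_eq by apply pos_INR.
  pose proof (pow_pred_le v r m Hr Hv). pose proof (Cmod_pow_le u r n Hu).
  pose proof (Hc n m). pose proof (INRS_pow_pos n p). pose proof (INRS_pow_pos m p).
  pose proof (INRS_pow_mono n p).
  pose proof (Cmod_ge_0 (c n m)). pose proof (Cmod_ge_0 (v ^ pred m)%C). pose proof (Cmod_ge_0 (u ^ n)%C).
  assert (HmS : INR m <= INR (S m)) by (rewrite S_INR; lra).
  pose proof (pos_INR m).
  assert (A : INR m * Cmod (v ^ pred m)%C <= INR (S m) * r ^ m / r).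
  { apply Rmult_le_reg_l with r. lra. field_simplify. 2: lra.
    replace (r * INR m * Cmod (v ^ pred m)%C) with (INR m * (r * Cmod (v ^ pred m)%C)) by ring.
    apply Rmult_le_compat; auto. apply Rmult_le_pos; lra. }
  replace (K / r * (INR (S n) ^ S p * r ^ n) * (INR (S m) ^ S p * r ^ m)) with
    ((K * INR (S n) ^ S p * INR (S m) ^ p) * (r ^ n * (INR (S m) * r ^ m / r))) by (change (INR (S n) ^ S p) with (INR (S n) * INR (S n) ^ p); change (INR (S m) ^ S p) with (INR (S m) * INR (S m) ^ p); field; lra).
  apply Rmult_le_compat; auto. 
  - apply Rmult_le_pos; auto. apply Rmult_le_pos; auto.
  - eapply Rle_trans. apply H1. apply Rmult_le_compat_r. lra.
    apply Rmult_le_compat_l; auto.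
  - apply Rmult_le_compat; auto. apply Rmult_le_pos; auto.
Qed.

Lemma S1_bound x y r n : 0 < r -> Cmod x <= r -> Cmod y <= r ->
  r * Cmod (y ^ n - x ^ n)%C <= INR n * r ^ n * Cmod (y - x)%C.
Proof.
  intros Hr Hx Hy. induction n.
  - simpl. replace (1 - 1)%C with (RtoC 0) by ring. rewrite Cmod_0. lra.
  - replace (y ^ S n - x ^ S n)%C with (y * (y ^ n - x ^ n) + x ^ n * (y - x))%C by (simpl; ring).
    pose proof (Cmod_triangle (y * (y ^ n - x ^ n))%C (x ^ n * (y - x))%C).
    rewrite !Cmod_mult in H.
    pose proof (Cmod_pow_le x r n Hx).
    pose proof (Cmod_ge_0 y). pose proof (Cmod_ge_0 (y ^ n - x ^ n)%C). pose proof (Cmod_ge_0 (y - x)%C).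
    pose proof (Cmod_ge_0 (x ^ n)%C).
    assert (A1 : Cmod y * (r * Cmod (y ^ n - x ^ n)%C) <= r * (INR n * r ^ n * Cmod (y - x)%C)).
    { apply Rmult_le_compat; auto. apply Rmult_le_pos; lra. }
    assert (A2 : r * (Cmod (x ^ n)%C * Cmod (y - x)%C) <= r * (r ^ n * Cmod (y - x)%C)).
    { apply Rmult_le_compat_l. lra. apply Rmult_le_compat_r; auto. }
    rewrite S_INR. simpl pow.
    assert (r * Cmod (y ^ S n - x ^ S n)%C <= r * (Cmod y * Cmod (y ^ n - x ^ n)%C + Cmod (x ^ n)%C * Cmod (y - x)%C)).
    { apply Rmult_le_compat_l. lra. replace (y ^ S n - x ^ S n)%C with (y * (y ^ n - x ^ n) + x ^ n * (y - x))%C by (simpl; ring). auto. }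
    nra.
Qed.

Lemma INR_pow_pred x n : (INR n * x ^ n)%C = (INR n * x * x ^ (pred n))%C.
Proof. destruct n. simpl. ring. simpl. ring. Qed.

Lemma S2_bound x y r n : 0 < r <= 1 -> Cmod x <= r -> Cmod y <= r ->
  r ^ 2 * Cmod (y ^ n - x ^ n - INR n * x ^ (pred n) * (y - x))%C <= INR n ^ 2 * r ^ n * Cmod (y - x)%C ^ 2.
Proof.
  intros Hr Hx Hy. induction n.
  - simpl. replace (1 - 1 - 0 * 1 * (y - x))%C with (RtoC 0) by ring. rewrite Cmod_0. lra.
  - set (R0 := (y ^ n - x ^ n - INR n * x ^ (pred n) * (y - x))%C) in *.
    assert (E : (y ^ S n - x ^ S n - INR (S n) * x ^ (pred (S n)) * (y - x))%C =
                (y * R0 + INR n * x ^ (pred n) * ((y - x) * (y - x)))%C).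
    { unfold R0. simpl pred. rewrite S_INR. rewrite RtoC_plus.
      transitivity (y ^ S n - x ^ S n - (INR n * x ^ n) * (y - x) - x ^ n * (y - x))%C. ring.
      rewrite INR_pow_pred. simpl. ring. }
    rewrite E.
    pose proof (Cmod_triangle (y * R0)%C (INR n * x ^ (pred n) * ((y - x) * (y - x)))%C) as T.
    rewrite !Cmod_mult, Cmod_R, Rabs_pos_eq in T by apply pos_INR.
    pose proof (pow_pred_le x r n Hr Hx).
    pose proof (Cmod_ge_0 y). pose proof (Cmod_ge_0 R0). set (h := Cmod (y - x)%C) in *.
    assert (Hh : 0 <= h) by apply Cmod_ge_0.
    pose proof (pos_INR n). pose proof (Cmod_ge_0 (x ^ pred n)%C).
    assert (A1 : Cmod y * (r ^ 2 * Cmod R0) <= r * (INR n ^ 2 * r ^ n * h ^ 2)).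
    { apply Rmult_le_compat; auto. apply Rmult_le_pos; [apply pow_le; lra|auto]. }
    assert (A2 : r ^ 2 * (INR n * Cmod (x ^ pred n)%C * (h * h)) <= r * (INR n * r ^ n * h ^ 2)).
    { replace (r ^ 2 * (INR n * Cmod (x ^ pred n)%C * (h * h))) with
        (r * (INR n * (r * Cmod (x ^ pred n)%C) * h ^ 2)) by ring.
      apply Rmult_le_compat_l. lra. apply Rmult_le_compat_r. apply pow2_ge_0.
      apply Rmult_le_compat_l; auto. }
    assert (A3 : r ^ 2 * Cmod (y * R0 + INR n * x ^ pred n * ((y - x) * (y - x)))%C <=
       r ^ 2 * (Cmod y * Cmod R0 + INR n * Cmod (x ^ pred n)%C * (h * h))).
    { apply Rmult_le_compat_l. apply pow_le; lra. auto. }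
    rewrite S_INR. simpl pow. simpl pow in A1, A2, A3.
    assert (0 <= r * r ^ n * h * h).
    { apply Rmult_le_pos. apply Rmult_le_pos. apply Rmult_le_pos. lra. apply pow_le; lra. auto. auto. }
    nra.
Qed.

Lemma poly_ineq N M a b : 0 <= N -> 0 <= M -> 0 <= a -> 0 <= b ->
  N ^ 2 * a ^ 2 + N * a * (M * b) + M ^ 2 * b ^ 2 <= (N + 1) ^ 2 * (M + 1) ^ 2 * (a + b) ^ 2.
Proof.
  intros HN HM Ha Hb.
  assert (P1 : N ^ 2 <= (N + 1) ^ 2 * (M + 1) ^ 2) by nra.
  assert (P2 : M ^ 2 <= (N + 1) ^ 2 * (M + 1) ^ 2) by nra.
  assert (P3 : N * M <= (N + 1) ^ 2 * (M + 1) ^ 2) by nra.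
  set (Q := (N + 1) ^ 2 * (M + 1) ^ 2) in *.
  assert (0 <= a * b) by nra.
  assert (N ^ 2 * a ^ 2 <= Q * a ^ 2) by (apply Rmult_le_compat_r; nra).
  assert (M ^ 2 * b ^ 2 <= Q * b ^ 2) by (apply Rmult_le_compat_r; nra).
  assert (N * M * (a * b) <= Q * (a * b)) by (apply Rmult_le_compat_r; nra).
  nra.
Qed.

Lemma T_bound x y x' y' r n m : 0 < r <= 1 -> Cmod x <= r -> Cmod y <= r -> Cmod x' <= r -> Cmod y' <= r ->
  r ^ 2 * Cmod (y ^ n * y' ^ m - x ^ n * x' ^ m - (y - x) * (INR n * x ^ (pred n) * x' ^ m)
               - (y' - x') * (x ^ n * (INR m * x' ^ (pred m))))%C
  <= INR (S n) ^ 2 * INR (S m) ^ 2 * (r ^ n * r ^ m) * (Cmod (y - x)%C + Cmod (y' - x')%C) ^ 2.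
Proof.
  intros Hr Hx Hy Hx' Hy'.
  set (Rn := (y ^ n - x ^ n - INR n * x ^ (pred n) * (y - x))%C).
  set (Rm := (y' ^ m - x' ^ m - INR m * x' ^ (pred m) * (y' - x'))%C).
  assert (E : (y ^ n * y' ^ m - x ^ n * x' ^ m - (y - x) * (INR n * x ^ (pred n) * x' ^ m)
               - (y' - x') * (x ^ n * (INR m * x' ^ (pred m))))%C =
              (Rn * y' ^ m + INR n * x ^ (pred n) * (y - x) * (y' ^ m - x' ^ m) + x ^ n * Rm)%C).
  { unfold Rn, Rm. ring. }
  rewrite E.
  pose proof (S2_bound x y r n Hr Hx Hy) as B1. fold Rn in B1.
  pose proof (S2_bound x' y' r m Hr Hx' Hy') as B2. fold Rm in B2.
  assert (Hr0 : 0 < r) by lra.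
  pose proof (S1_bound x' y' r m Hr0 Hx' Hy') as B3.
  pose proof (pow_pred_le x r n Hr Hx) as B4.
  pose proof (Cmod_pow_le y' r m Hy') as B5.
  pose proof (Cmod_pow_le x r n Hx) as B6.
  set (h := Cmod (y - x)%C) in *. set (k := Cmod (y' - x')%C) in *.
  assert (Hh : 0 <= h) by apply Cmod_ge_0. assert (Hk : 0 <= k) by apply Cmod_ge_0.
  pose proof (Cmod_triangle (Rn * y' ^ m + INR n * x ^ (pred n) * (y - x) * (y' ^ m - x' ^ m))%C (x ^ n * Rm)%C) as T1.
  pose proof (Cmod_triangle (Rn * y' ^ m)%C (INR n * x ^ (pred n) * (y - x) * (y' ^ m - x' ^ m))%C) as T2.
  rewrite !Cmod_mult in T1. rewrite !Cmod_mult in T2. rewrite Cmod_R, Rabs_pos_eq in T2 by apply pos_INR.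
  fold h in T2.
  pose proof (Cmod_ge_0 Rn). pose proof (Cmod_ge_0 Rm). pose proof (Cmod_ge_0 (y' ^ m)%C).
  pose proof (Cmod_ge_0 (x ^ n)%C). pose proof (Cmod_ge_0 (x ^ pred n)%C).
  pose proof (Cmod_ge_0 (y' ^ m - x' ^ m)%C). pose proof (pos_INR n). pose proof (pos_INR m).
  assert (Hrn : 0 <= r ^ n) by (apply pow_le; lra).
  assert (Hrm : 0 <= r ^ m) by (apply pow_le; lra).
  assert (C1 : r ^ 2 * (Cmod Rn * Cmod (y' ^ m)%C) <= INR n ^ 2 * r ^ n * h ^ 2 * r ^ m).
  { replace (r ^ 2 * (Cmod Rn * Cmod (y' ^ m)%C)) with ((r ^ 2 * Cmod Rn) * Cmod (y' ^ m)%C) by ring.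
    apply Rmult_le_compat; auto. apply Rmult_le_pos; auto. apply pow_le; lra. }
  assert (C2 : r ^ 2 * (INR n * Cmod (x ^ pred n)%C * h * Cmod (y' ^ m - x' ^ m)%C) <=
               INR n * r ^ n * h * (INR m * r ^ m * k)).
  { replace (r ^ 2 * (INR n * Cmod (x ^ pred n)%C * h * Cmod (y' ^ m - x' ^ m)%C)) with
      ((INR n * h) * ((r * Cmod (x ^ pred n)%C) * (r * Cmod (y' ^ m - x' ^ m)%C))) by ring.
    replace (INR n * r ^ n * h * (INR m * r ^ m * k)) with ((INR n * h) * (r ^ n * (INR m * r ^ m * k))) by ring.
    apply Rmult_le_compat_l. apply Rmult_le_pos; auto.
    apply Rmult_le_compat; auto; apply Rmult_le_pos; lra. }
  assert (C3 : r ^ 2 * (Cmod (x ^ n)%C * Cmod Rm) <= r ^ n * (INR m ^ 2 * r ^ m * k ^ 2)).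
  { replace (r ^ 2 * (Cmod (x ^ n)%C * Cmod Rm)) with (Cmod (x ^ n)%C * (r ^ 2 * Cmod Rm)) by ring.
    apply Rmult_le_compat; auto. apply Rmult_le_pos; auto. apply pow_le; lra. }
  pose proof (poly_ineq (INR n) (INR m) h k (pos_INR n) (pos_INR m) Hh Hk) as PI.
  rewrite !S_INR.
  assert (Hrr : 0 <= r ^ n * r ^ m) by (apply Rmult_le_pos; auto).
  apply Rmult_le_compat_r with (r := r ^ n * r ^ m) in PI; auto.
  assert (r ^ 2 * Cmod (Rn * y' ^ m + INR n * x ^ pred n * (y - x) * (y' ^ m - x' ^ m) + x ^ n * Rm)%C <=
     r ^ 2 * (Cmod Rn * Cmod (y' ^ m)%C + INR n * Cmod (x ^ pred n)%C * h * Cmod (y' ^ m - x' ^ m)%C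
       + Cmod (x ^ n)%C * Cmod Rm)).
  { apply Rmult_le_compat_l. apply pow_le; lra. lra. }
  nra.
Qed.

Lemma Dbound_scal a K p r z : 0 < r -> Dbound a K p r -> Dbound (fun n m => (z * a n m)%C) (Cmod z * K) p r.
Proof.
  intros Hr H n m. rewrite Cmod_mult. rewrite !Rmult_assoc. apply Rmult_le_compat_l.
  apply Cmod_ge_0. rewrite <- !Rmult_assoc. apply H.
Qed.

Lemma Dbound_minus a b K1 K2 p r : 0 < r -> Dbound a K1 p r -> Dbound b K2 p r ->
  Dbound (fun n m => (a n m - b n m)%C) (K1 + K2) p r.
Proof.
  intros Hr Ha Hb n m. unfold Cminus. eapply Rle_trans. apply Cmod_triangle.
  rewrite Cmod_opp. specialize (Ha n m). specialize (Hb n m). lra.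
Qed.

Lemma Dbound_plus a b K1 K2 p r : 0 < r -> Dbound a K1 p r -> Dbound b K2 p r ->
  Dbound (fun n m => (a n m + b n m)%C) (K1 + K2) p r.
Proof.
  intros Hr Ha Hb n m. eapply Rle_trans. apply Cmod_triangle.
  specialize (Ha n m). specialize (Hb n m). lra.
Qed.

Lemma Dbound_nonneg a K p r : 0 < r -> Dbound a K p r -> 0 <= K.
Proof.
  intros Hr H. specialize (H 0%nat 0%nat). pose proof (Cmod_ge_0 (a 0%nat 0%nat)).
  pose proof (Wt_pos p r 0 Hr). 
  destruct (Rle_dec 0 K); auto.
  assert (K * Wt p r 0 * Wt p r 0 < 0).
  { rewrite Rmult_assoc. apply Rmult_neg_pos. lra. apply Rmult_lt_0_compat; auto. }
  lra.
Qed.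

Lemma DS_taylor c K p r x y x' y' : CB c K p -> 0 < r < 1 ->
  Cmod x <= r -> Cmod y <= r -> Cmod x' <= r -> Cmod y' <= r ->
  Cmod (DS c y y' - DS c x x' - (y - x) * DSu c x x' - (y' - x') * DSv c x x')%C
  <= K / r ^ 2 * (Cmod (y - x)%C + Cmod (y' - x')%C) ^ 2 * SW (S (S p)) r * SW (S (S p)) r.
Proof.
  intros Hc Hr Hx Hy Hx' Hy'.
  assert (Hr0 : 0 < r) by lra. assert (Hr1 : 0 < r <= 1) by lra.
  pose proof (proj1 Hc) as HK.
  pose proof (DS_terms_bound c K p r y y' Hc Hr0 Hy Hy') as bA.
  pose proof (DS_terms_bound c K p r x x' Hc Hr0 Hx Hx') as bB.
  apply (Dbound_mono _ _ p (S p)) in bA; auto.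
  apply (Dbound_mono _ _ p (S p)) in bB; auto.
  pose proof (DSu_terms_bound c K p r x x' Hc Hr1 Hx Hx') as bU.
  pose proof (DSv_terms_bound c K p r x x' Hc Hr1 Hx Hx') as bV.
  pose proof (Dbound_scal _ _ _ _ (y - x)%C Hr0 bU) as bU'.
  pose proof (Dbound_scal _ _ _ _ (y' - x')%C Hr0 bV) as bV'.
  unfold DS, DSu, DSv.
  rewrite <- (D2_scal (y - x)%C _ _ _ _ Hr bU).
  rewrite <- (D2_scal (y' - x')%C _ _ _ _ Hr bV).
  rewrite <- (D2_minus _ _ _ _ _ _ Hr bA bB).
  pose proof (Dbound_minus _ _ _ _ _ _ Hr0 bA bB) as bAB.
  rewrite <- (D2_minus _ _ _ _ _ _ Hr bAB bU').
  pose proof (Dbound_minus _ _ _ _ _ _ Hr0 bAB bU') as bABU.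
  rewrite <- (D2_minus _ _ _ _ _ _ Hr bABU bV').
  set (h := Cmod (y - x)%C). set (k := Cmod (y' - x')%C).
  assert (bT : Dbound (fun n m => ((c n m * (y ^ n * y' ^ m) - c n m * (x ^ n * x' ^ m)
      - (y - x) * (c n m * (INR n * x ^ pred n * x' ^ m)))
      - (y' - x') * (c n m * (x ^ n * (INR m * x' ^ pred m))))%C)
      (K / r ^ 2 * (h + k) ^ 2) (S (S p)) r).
  { intros n m.
    replace ((c n m * (y ^ n * y' ^ m) - c n m * (x ^ n * x' ^ m)
      - (y - x) * (c n m * (INR n * x ^ pred n * x' ^ m)))
      - (y' - x') * (c n m * (x ^ n * (INR m * x' ^ pred m))))%C with
      (c n m * (y ^ n * y' ^ m - x ^ n * x' ^ m - (y - x) * (INR n * x ^ (pred n) * x' ^ m)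
               - (y' - x') * (x ^ n * (INR m * x' ^ (pred m)))))%C by ring.
    rewrite Cmod_mult.
    pose proof (T_bound x y x' y' r n m Hr1 Hx Hy Hx' Hy') as TB. fold h k in TB.
    destruct Hc as [_ Hc]. specialize (Hc n m).
    pose proof (Cmod_ge_0 (c n m)).
    set (T := Cmod (y ^ n * y' ^ m - x ^ n * x' ^ m - (y - x) * (INR n * x ^ (pred n) * x' ^ m)
               - (y' - x') * (x ^ n * (INR m * x' ^ (pred m))))%C) in *.
    assert (HT : T <= INR (S n) ^ 2 * INR (S m) ^ 2 * (r ^ n * r ^ m) * (h + k) ^ 2 / r ^ 2).
    { apply Rmult_le_reg_l with (r ^ 2). apply pow_lt; auto.
      match goal with |- _ <= r ^ 2 * (?X / r ^ 2) => replace (r ^ 2 * (X / r ^ 2)) with X by (field; lra) end.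
      exact TB. }
    assert (HT0 : 0 <= T) by apply Cmod_ge_0.
    unfold Wt.
    replace (K / r ^ 2 * (h + k) ^ 2 * (INR (S n) ^ S (S p) * r ^ n) * (INR (S m) ^ S (S p) * r ^ m)) with
      ((K * INR (S n) ^ p * INR (S m) ^ p) * (INR (S n) ^ 2 * INR (S m) ^ 2 * (r ^ n * r ^ m) * (h + k) ^ 2 / r ^ 2)).
    2:{ replace (S (S p)) with (p + 2)%nat by lia. rewrite !pow_add. field. lra. }
    apply Rmult_le_compat; auto. }
  destruct (D2_conv _ _ _ _ Hr bT) as [_ [_ [_ Hn]]].
  eapply Rle_trans. apply Hn. lra.
Qed.

Lemma DS_deriv c K p (al be ga de x0 : C) : CB c K p ->
  Cmod (al * x0 + be)%C < 1 -> Cmod (ga * x0 + de)%C < 1 ->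
  CisD (fun x => DS c (al * x + be)%C (ga * x + de)%C) x0
    (al * DSu c (al * x0 + be)%C (ga * x0 + de)%C + ga * DSv c (al * x0 + be)%C (ga * x0 + de)%C)%C.
Proof.
  intros Hc Hu Hv.
  set (u := (al * x0 + be)%C) in *. set (v := (ga * x0 + de)%C) in *.
  set (mx := Rmax (Cmod u) (Cmod v)).
  assert (Hmx : mx < 1) by (unfold mx; apply Rmax_lub_lt; auto).
  assert (Hmu : Cmod u <= mx) by apply Rmax_l. assert (Hmv : Cmod v <= mx) by apply Rmax_r.
  pose proof (Cmod_ge_0 u).
  set (r := (1 + mx) / 2).
  assert (Hr : 0 < r < 1) by (unfold r; lra).
  set (A := Cmod al + Cmod ga + 1).
  assert (HA : 0 < A) by (unfold A; pose proof (Cmod_ge_0 al); pose proof (Cmod_ge_0 ga); lra).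
  apply deriv_of_taylor with (M := K / r ^ 2 * SW (S (S p)) r * SW (S (S p)) r * A ^ 2) (eps := (r - mx) / A).
  { apply Rdiv_lt_0_compat; auto. unfold r; lra. }
  intros y Hy.
  set (d := Cmod (y - x0)%C) in *. assert (Hd : 0 <= d) by apply Cmod_ge_0.
  assert (HdA : A * d < r - mx).
  { apply Rmult_lt_compat_l with (r := A) in Hy; auto.
    replace (A * ((r - mx) / A)) with (r - mx) in Hy by (field; lra). lra. }
  assert (Eu : (al * y + be - u)%C = (al * (y - x0))%C) by (unfold u; ring).
  assert (Ev : (ga * y + de - v)%C = (ga * (y - x0))%C) by (unfold v; ring).
  assert (Hdu : Cmod (al * y + be - u)%C = Cmod al * d) by (rewrite Eu, Cmod_mult; auto).
  assert (Hdv : Cmod (ga * y + de - v)%C = Cmod ga * d) by (rewrite Ev, Cmod_mult; auto).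
  pose proof (Cmod_ge_0 al). pose proof (Cmod_ge_0 ga).
  assert (Hu' : Cmod (al * y + be)%C <= r).
  { replace (al * y + be)%C with (u + (al * y + be - u))%C by ring.
    eapply Rle_trans. apply Cmod_triangle. rewrite Hdu. unfold A in HdA. nra. }
  assert (Hv' : Cmod (ga * y + de)%C <= r).
  { replace (ga * y + de)%C with (v + (ga * y + de - v))%C by ring.
    eapply Rle_trans. apply Cmod_triangle. rewrite Hdv. unfold A in HdA. nra. }
  pose proof (DS_taylor c K p r u (al * y + be)%C v (ga * y + de)%C Hc Hr
    ltac:(unfold r; lra) Hu' ltac:(unfold r; lra) Hv') as T.
  rewrite Hdu, Hdv in T. cbv beta. fold u v.
  replace (DS c (al * y + be)%C (ga * y + de)%C - DS c u v -
     (y - x0) * (al * DSu c u v + ga * DSv c u v))%C with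
    (DS c (al * y + be)%C (ga * y + de)%C - DS c u v - (al * y + be - u) * DSu c u v -
      (ga * y + de - v) * DSv c u v)%C by (rewrite Eu, Ev; ring).
  eapply Rle_trans. apply T.
  pose proof (SW_pos (S (S p)) r Hr). destruct Hc as [HK _].
  assert (0 <= K / r ^ 2) by (apply Rdiv_le_0_compat; auto; apply pow_lt; lra).
  assert ((Cmod al * d + Cmod ga * d) ^ 2 <= A ^ 2 * d ^ 2).
  { replace ((Cmod al * d + Cmod ga * d) ^ 2) with (((Cmod al + Cmod ga) * d) ^ 2) by ring.
    rewrite <- Rpow_mult_distr. apply pow_incr. split. nra. unfold A. nra. }
  assert (0 <= SW (S (S p)) r * SW (S (S p)) r) by nra.
  replace (K / r ^ 2 * SW (S (S p)) r * SW (S (S p)) r * A ^ 2 * d ^ 2) with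
    (K / r ^ 2 * (A ^ 2 * d ^ 2) * SW (S (S p)) r * SW (S (S p)) r) by ring.
  apply Rmult_le_compat_r. lra. apply Rmult_le_compat_r. lra. apply Rmult_le_compat_l; auto.
Qed.

Lemma sumR_S (a : nat -> R) K : @eq R (sum_n a (S K)) (sum_n a K + a (S K)).
Proof. rewrite sum_Sn. reflexivity. Qed.

Lemma sumR_O (a : nat -> R) : @eq R (sum_n a 0) (a 0%nat).
Proof. apply sum_O. Qed.

Lemma sumR_shift (a : nat -> R) K : @eq R (sum_n a (S K)) (a 0%nat + sum_n (fun k => a (S k)) K).
Proof.
  induction K.
  - rewrite sumR_S, !sumR_O. auto.
  - rewrite sumR_S, IHK, sumR_S. ring.
Qed.

Lemma sumR_plus (a b : nat -> R) K : @eq R (sum_n (fun k => a k + b k) K) (sum_n a K + sum_n b K).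
Proof. induction K. rewrite !sumR_O; auto. rewrite !sumR_S, IHK. ring. Qed.

Lemma sumR_scal (c : R) (a : nat -> R) K : @eq R (sum_n (fun k => c * a k) K) (c * sum_n a K).
Proof. induction K. rewrite !sumR_O; auto. rewrite !sumR_S, IHK. ring. Qed.

Lemma sumR_ext (a b : nat -> R) K : (forall k, a k = b k) -> @eq R (sum_n a K) (sum_n b K).
Proof. intros H. induction K. rewrite !sumR_O; auto. rewrite !sumR_S, IHK, H. auto. Qed.

Lemma Series_sum_n (f : nat -> nat -> R) K : (forall k, ex_series (f k)) ->
  sum_n (fun k => Series (f k)) K = Series (fun j => sum_n (fun k => f k j) K) /\
  ex_series (fun j => sum_n (fun k => f k j) K).
Proof.
  intros Hf. induction K.
  - rewrite sumR_O. split.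
    + apply Series_ext. intros j. rewrite sumR_O. auto.
    + apply (ex_series_ext (f 0%nat)). intros j. rewrite sumR_O. auto. apply Hf.
  - destruct IHK as [E X]. rewrite sumR_S, E. split.
    + rewrite <- Series_plus; auto. apply Series_ext. intros j. rewrite sumR_S. auto.
    + pose proof (ex_series_plus (K:=R_AbsRing) (V:=R_NormedModule) _ _ X (Hf (S K))) as H.
      revert H. apply ex_series_ext. intros j. rewrite sumR_S. reflexivity.
Qed.

Lemma geo_is q : 0 < q < 1 -> is_series (fun j => (1 - q) * q ^ j) 1.
Proof.
  intros Hq. assert (G : is_series (fun j => q ^ j) (/ (1 - q))).
  { apply is_series_geom. rewrite Rabs_pos_eq; lra. }
  pose proof (is_series_Rscal (1 - q) _ _ G) as H.
  assert (E : (1 - q) * / (1 - q) = 1) by (field; lra). rewrite E in H. exact H.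
Qed.

Section Absp.
Variables (rho q : R).
Hypothesis Hrho : 0 < rho.
Hypothesis Hq : 0 < q < 1.

Lemma absp_S k n b : absp rho q (S k) n (S b) =
  rho / (rho + 1) * Series (fun j => (1 - q) * q ^ j * absp rho q k (n + S j) (S b))
  + / (rho + 1) * (INR n / INR (n + S b) * absp rho q k (Nat.pred n) (S b)
     + INR (S b) / INR (n + S b) * absp rho q k n b).
Proof. reflexivity. Qed.

Lemma absp_0b k n : absp rho q (S k) n 0 = 0.
Proof. reflexivity. Qed.

Lemma weights n b : 0 <= INR n / INR (n + S b) /\ 0 <= INR (S b) / INR (n + S b) /\
  INR n / INR (n + S b) + INR (S b) / INR (n + S b) = 1.
Proof.
  assert (H : 0 < INR (n + S b)) by (apply lt_0_INR; lia).
  pose proof (pos_INR n). pose proof (pos_INR (S b)).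
  repeat split.
  - apply Rdiv_le_0_compat; auto.
  - apply Rdiv_le_0_compat; auto.
  - rewrite plus_INR. field. rewrite <- plus_INR. lra.
Qed.

Lemma inner_series_bounds (f : nat -> R) : (forall j, 0 <= f j <= 1) ->
  ex_series (fun j => (1 - q) * q ^ j * f j) /\
  0 <= Series (fun j => (1 - q) * q ^ j * f j) <= 1.
Proof.
  intros Hf.
  assert (Hg : forall j, 0 <= (1 - q) * q ^ j) by (intros; apply Rmult_le_pos; [lra| apply pow_le; lra]).
  assert (Hle : forall j, 0 <= (1 - q) * q ^ j * f j <= (1 - q) * q ^ j).
  { intros j. specialize (Hf j). specialize (Hg j). split. nra. nra. }
  assert (Hex : ex_series (fun j => (1 - q) * q ^ j * f j)).
  { apply (ex_series_le (K:=R_AbsRing) (V:=R_CompleteNormedModule) _ (fun j => (1 - q) * q ^ j)).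
    intros j. specialize (Hle j). change (Rabs ((1 - q) * q ^ j * f j) <= (1 - q) * q ^ j).
    rewrite Rabs_pos_eq; lra.
    exists 1. apply geo_is; auto. }
  split; auto. split.
  - apply Series_nonneg; auto. intros j; apply Hle.
  - apply Rle_trans with (Series (fun j => (1 - q) * q ^ j)).
    apply Series_le; auto. exact (ex_intro _ 1 (geo_is q Hq)).
    rewrite (is_series_unique _ _ (geo_is q Hq)). lra.
Qed.

Lemma absp_bounds k : forall n b, 0 <= absp rho q k n b <= 1.
Proof.
  induction k; intros n b.
  - destruct b; simpl; lra.
  - destruct b. rewrite absp_0b. lra.
    rewrite absp_S.
    destruct (inner_series_bounds (fun j => absp rho q k (n + S j) (S b))) as [_ HX].
    { intros j; apply IHk. }
    destruct (weights n b) as [W1 [W2 W3]].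
    pose proof (IHk (Nat.pred n) (S b)). pose proof (IHk n b).
    set (X := Series (fun j => (1 - q) * q ^ j * absp rho q k (n + S j) (S b))) in *.
    set (w1 := INR n / INR (n + S b)) in *. set (w2 := INR (S b) / INR (n + S b)) in *.
    assert (0 <= w1 * absp rho q k (Nat.pred n) (S b) + w2 * absp rho q k n b <= 1) by nra.
    assert (Hr1 : 0 < rho + 1) by lra.
    replace (rho / (rho + 1) * X + / (rho + 1) * (w1 * absp rho q k (Nat.pred n) (S b) + w2 * absp rho q k n b))
      with ((rho * X + (w1 * absp rho q k (Nat.pred n) (S b) + w2 * absp rho q k n b)) / (rho + 1)) by (field; lra).
    split. apply Rdiv_le_0_compat; nra.
    apply Rmult_le_reg_r with (rho + 1); auto. unfold Rdiv. rewrite Rmult_assoc, Rinv_l by lra. nra.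
Qed.

Lemma absp_inner_ex k n b : ex_series (fun j => (1 - q) * q ^ j * absp rho q k (n + S j) b).
Proof. apply inner_series_bounds. intros j; apply absp_bounds. Qed.

Lemma absp_partial K : forall n b, sum_n (fun k => absp rho q k n b) K <= 1.
Proof.
  induction K; intros n b.
  - rewrite sumR_O. apply absp_bounds.
  - rewrite sumR_shift. destruct b.
    + simpl absp at 1. rewrite (sumR_ext _ (fun _ => 0)) by (intros; apply absp_0b).
      assert (Z : forall K, @eq R (sum_n (fun _ : nat => 0) K) 0).
      { intros K'. induction K'. rewrite sumR_O; auto. rewrite sumR_S, IHK'. ring. }
      rewrite Z. lra.
    + simpl absp at 1.
      rewrite (sumR_ext _ (fun k => rho / (rho + 1) * Series (fun j => (1 - q) * q ^ j * absp rho q k (n + S j) (S b))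
        + / (rho + 1) * (INR n / INR (n + S b) * absp rho q k (Nat.pred n) (S b)
        + INR (S b) / INR (n + S b) * absp rho q k n b))) by (intros; apply absp_S).
      rewrite sumR_plus, !sumR_scal, sumR_plus, !sumR_scal.
      destruct (Series_sum_n (fun k j => (1 - q) * q ^ j * absp rho q k (n + S j) (S b)) K) as [E _].
      { intros k; apply absp_inner_ex. }
      rewrite E.
      rewrite (Series_ext _ (fun j => (1 - q) * q ^ j * sum_n (fun k => absp rho q k (n + S j) (S b)) K))
        by (intros j; apply sumR_scal).
      destruct (inner_series_bounds (fun j => sum_n (fun k => absp rho q k (n + S j) (S b)) K)) as [_ HX].
      { intros j. split. 2: apply IHK.
        induction K. rewrite sumR_O; apply absp_bounds.
        rewrite sumR_S. pose proof (absp_bounds (S K) (n + S j) (S b)).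
        assert (0 <= sum_n (fun k => absp rho q k (n + S j) (S b)) K).
        { clear -Hrho Hq. induction K. rewrite sumR_O; apply absp_bounds.
          rewrite sumR_S. pose proof (absp_bounds (S K) (n + S j) (S b)). lra. }
        lra. }
      destruct (weights n b) as [W1 [W2 W3]].
      pose proof (IHK (Nat.pred n) (S b)). pose proof (IHK n b).
      set (X := Series (fun j => (1 - q) * q ^ j * sum_n (fun k => absp rho q k (n + S j) (S b)) K)) in *.
      set (w1 := INR n / INR (n + S b)) in *. set (w2 := INR (S b) / INR (n + S b)) in *.
      set (Y := sum_n (fun k => absp rho q k (Nat.pred n) (S b)) K) in *.
      set (Z := sum_n (fun k => absp rho q k n b) K) in *.
      assert (w1 * Y + w2 * Z <= 1) by nra.
      assert (Hr1 : 0 < rho + 1) by lra.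
      replace (0 + (rho / (rho + 1) * X + / (rho + 1) * (w1 * Y + w2 * Z)))
        with ((rho * X + (w1 * Y + w2 * Z)) / (rho + 1)) by (field; lra).
      apply Rmult_le_reg_r with (rho + 1); auto. unfold Rdiv. rewrite Rmult_assoc, Rinv_l by lra. nra.
Qed.

Lemma absp_sum_ex n b : ex_series (fun k => absp rho q k n b) /\ Series (fun k => absp rho q k n b) <= 1.
Proof.
  assert (Hinc : forall K, sum_n (fun k => absp rho q k n b) K <= sum_n (fun k => absp rho q k n b) (S K)).
  { intros K. rewrite sumR_S. pose proof (absp_bounds (S K) n b). lra. }
  destruct (ex_finite_lim_seq_incr _ 1 Hinc (fun K => absp_partial K n b)) as [l Hl].
  assert (Hs : is_series (fun k => absp rho q k n b) l) by exact Hl.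
  split. exists l; auto.
  rewrite (is_series_unique _ _ Hs).
  pose proof (is_lim_seq_le _ _ _ _ (fun K => absp_partial K n b) Hl (is_lim_seq_const 1)). simpl in H. auto.
Qed.

End Absp.

Lemma finite_sum_lim (t : nat -> nat -> R) J :
  (forall j, is_lim_seq (fun K => t K j) 0) -> is_lim_seq (fun K => sum_n (t K) J) 0.
Proof.
  intros H. induction J.
  - apply is_lim_seq_ext with (fun K => t K 0%nat). intros; rewrite sumR_O; auto. apply H.
  - apply is_lim_seq_ext with (fun K => sum_n (t K) J + t K (S J)).
    intros; rewrite sumR_S; auto.
    apply (is_lim_seq_eq _ (0 + 0)). 2: ring. apply is_lim_seq_plus'; auto.
Qed.

Lemma DCT_series (t : nat -> nat -> R) (W : nat -> R) :
  (forall K j, 0 <= t K j <= W j) -> ex_series W ->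
  (forall j, is_lim_seq (fun K => t K j) 0) ->
  is_lim_seq (fun K => Series (t K)) 0.
Proof.
  intros Ht HW Hl.
  assert (Hex : forall K, ex_series (t K)).
  { intros K. apply (ex_series_le (K:=R_AbsRing) (V:=R_CompleteNormedModule) _ W); auto.
    intros j. change (Rabs (t K j) <= W j). rewrite Rabs_pos_eq; apply Ht. }
  destruct HW as [SWv HSW].
  apply is_lim_seq_spec. intros eps.
  assert (He2 : 0 < eps / 2) by (pose proof (cond_pos eps); lra).
  assert (HSW' : is_lim_seq (sum_n W) SWv) by exact HSW.
  apply is_lim_seq_spec in HSW'.
  destruct (HSW' (mkposreal _ He2)) as [J HJ].
  specialize (HJ J (le_n J)). simpl in HJ.
  pose proof (finite_sum_lim t J Hl) as HF.
  apply is_lim_seq_spec in HF. destruct (HF (mkposreal _ He2)) as [K0 HK0].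
  exists K0. intros K HK. specialize (HK0 K HK). simpl in HK0.
  rewrite Rminus_0_r in *.
  assert (Hsplit : Series (t K) = sum_n (t K) J + Series (fun k => t K (S J + k)%nat)).
  { rewrite (Series_incr_n (t K) (S J)); auto. rewrite sum_n_Reals. simpl pred. auto. lia. }
  assert (HsplitW : SWv = sum_n W J + Series (fun k => W (S J + k)%nat)).
  { rewrite <- (is_series_unique _ _ HSW). rewrite (Series_incr_n W (S J)); auto.
    rewrite sum_n_Reals. simpl pred. auto. lia. exists SWv; auto. }
  assert (Htail : Series (fun k => t K (S J + k)%nat) <= Series (fun k => W (S J + k)%nat)).
  { apply Series_le. intros k; apply Ht. apply (ex_series_incr_n W (S J)). exists SWv; auto. }
  assert (Hnn : 0 <= Series (t K)).
  { apply Series_nonneg; auto. intros j; apply Ht. }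
  assert (Hnn2 : 0 <= sum_n (t K) J).
  { clear -Ht. induction J. rewrite sumR_O. apply Ht. rewrite sumR_S. pose proof (Ht K (S J)). lra. }
  rewrite Rabs_pos_eq by auto. rewrite Rabs_pos_eq in HK0 by auto.
  assert (Series (fun k => W (S J + k)%nat) < eps / 2).
  { rewrite Rabs_minus_sym in HJ. rewrite Rabs_pos_eq in HJ. lra.
    assert (0 <= Series (fun k => W (S J + k)%nat)).
    { apply Series_nonneg. apply (ex_series_incr_n W (S J)). exists SWv; auto.
      intros k. pose proof (Ht 0%nat (S J + k)%nat). lra. }
    lra. }
  lra.
Qed.

Lemma csum_CIS (a : nat -> nat -> C) (A : nat -> C) K :
  (forall k, CIS (fun j => a k j) (A k)) ->
  CIS (fun j => sum_n (G:=C_AbelianMonoid) (fun k => a k j) K) (sum_n (G:=C_AbelianMonoid) A K).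
Proof.
  intros H. induction K.
  - rewrite sum_O. apply (CIS_ext (fun j => a 0%nat j)). intros; rewrite sum_O; auto. apply H.
  - rewrite sum_Sn. apply (CIS_ext (fun j => Cplus (sum_n (G:=C_AbelianMonoid) (fun k => a k j) K) (a (S K) j))).
    intros j. rewrite sum_Sn. reflexivity.
    apply CIS_plus; auto.
Qed.

Lemma Fubini (a : nat -> nat -> C) (w : nat -> nat -> R) (Wc : nat -> R) (A Cc : nat -> C) (L : C) :
  (forall k j, Cmod (a k j) <= w k j) ->
  (forall j, is_series (fun k => w k j) (Wc j)) ->
  ex_series Wc ->
  (forall k, CIS (fun j => a k j) (A k)) ->
  (forall j, CIS (fun k => a k j) (Cc j)) ->
  CIS Cc L -> CIS A L.
Proof.
  intros Hw HWc HWe HA HC HL.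
  assert (Hw0 : forall k j, 0 <= w k j) by (intros k j; eapply Rle_trans; [apply Cmod_ge_0| apply Hw]).
  set (tau := fun K j => Wc j - sum_n (fun k => w k j) K).
  assert (Htail : forall K j, Wc j - sum_n (fun k => w k j) K = Series (fun k => w (S K + k)%nat j)).
  { intros K j. rewrite <- (is_series_unique _ _ (HWc j)). rewrite (Series_incr_n _ (S K)).
    rewrite sum_n_Reals. simpl pred. ring. lia. exists (Wc j); auto. }
  assert (Htau : forall K j, 0 <= tau K j <= Wc j).
  { intros K j. unfold tau. rewrite Htail. split.
    - apply Series_nonneg. apply (ex_series_incr_n (fun k => w k j) (S K)). exists (Wc j); auto.
      intros; auto.
    - assert (0 <= sum_n (fun k => w k j) K).
      { clear -Hw0. induction K. rewrite sumR_O; auto. rewrite sumR_S. pose proof (Hw0 (S K) j). lra. }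
      rewrite <- Htail. lra. }
  apply Clim_of_bound with (fun K => Series (tau K)).
  - apply DCT_series with Wc; auto.
    intros j. unfold tau.
    apply (is_lim_seq_eq _ (Wc j - Wc j)). 2: ring.
    apply is_lim_seq_minus'. apply is_lim_seq_const. exact (HWc j).
  - intros K.
    assert (H1 : CIS (fun j => Cminus (Cc j) (sum_n (G:=C_AbelianMonoid) (fun k => a k j) K))
                     (Cminus L (sum_n (G:=C_AbelianMonoid) A K))).
    { apply CIS_minus; auto. apply csum_CIS; auto. }
    assert (H2 : forall j, Cmod (Cminus (Cc j) (sum_n (G:=C_AbelianMonoid) (fun k => a k j) K)) <= tau K j).
    { intros j. unfold tau. rewrite Htail.
      assert (T : CIS (fun k => a (S K + k)%nat j) (Cminus (Cc j) (sum_n (G:=C_AbelianMonoid) (fun k => a k j) K))).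
      { apply (is_series_incr_n (K:=C_AbsRing) (V:=C_NormedModule) (fun k => a k j) (S K)). lia. simpl pred.
        match goal with |- is_series _ ?x => assert (E : x = Cc j) end.
        { change (Cplus (Cminus (Cc j) (sum_n (G:=C_AbelianMonoid) (fun k => a k j) K)) (sum_n (G:=C_AbelianMonoid) (fun k => a k j) K) = Cc j). ring. }
        rewrite E. apply HC. }
      apply (CIS_norm_le (fun k => a (S K + k)%nat j) _ (fun k => w (S K + k)%nat j)); auto.
      apply Series_correct. apply (ex_series_incr_n (fun k => w k j) (S K)). exists (Wc j); auto. }
    assert (Hex : ex_series (tau K)).
    { apply (ex_series_le (K:=R_AbsRing) (V:=R_CompleteNormedModule) _ Wc); auto.
      intros j. change (Rabs (tau K j) <= Wc j). rewrite Rabs_pos_eq; apply Htau. }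
    change (Cmod (Cminus (sum_n (G:=C_AbelianMonoid) A K) L) <= Series (tau K)).
    rewrite <- Cmod_opp.
    replace (Copp (Cminus (sum_n (G:=C_AbelianMonoid) A K) L)) with (Cminus L (sum_n (G:=C_AbelianMonoid) A K)) by ring.
    apply (CIS_norm_le _ _ (tau K) _ H1); auto. apply Series_correct; auto.
Qed.

Lemma RtoC_sum_n (f : nat -> R) N :
  sum_n (G:=C_AbelianMonoid) (fun n => RtoC (f n)) N = RtoC (sum_n f N).
Proof.
  induction N. rewrite !sum_O. auto.
  rewrite !sum_Sn, IHN. change (Cplus (RtoC (sum_n f N)) (RtoC (f (S N))) = RtoC (sum_n f N + f (S N))).
  rewrite RtoC_plus. auto.
Qed.

Lemma RtoC_CIS (f : nat -> R) l : is_series f l -> CIS (fun n => RtoC (f n)) (RtoC l).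
Proof.
  intros H. apply Clim_of_bound with (fun N => Rabs (sum_n f N - l)).
  - replace 0 with (Rabs (l - l)) by (rewrite Rminus_eq_0; apply Rabs_R0).
    apply (is_lim_seq_abs _ (Finite (l - l))). apply is_lim_seq_minus'. exact H. apply is_lim_seq_const.
  - intros N. change (Cmod (Cminus (sum_n (G:=C_AbelianMonoid) (fun n => RtoC (f n)) N) (RtoC l)) <= Rabs (sum_n f N - l)).
    rewrite RtoC_sum_n, <- RtoC_minus, Cmod_R. lra.
Qed.

Section Estar.
Variables (rho q : R) (s : C).
Hypothesis Hrho : 0 < rho.
Hypothesis Hq : 0 < q < 1.
Hypothesis Hs : 0 <= Re s.

Definition zz : C := Cdiv (RtoC (rho + 1)) (Cplus s (RtoC (rho + 1))).

Lemma den_nz : Cplus s (RtoC (rho + 1)) <> RtoC 0.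
Proof.
  intros E. apply (f_equal Re) in E. rewrite re_plus, !re_RtoC in E. lra.
Qed.

Lemma zz_bound : Cmod zz <= 1.
Proof.
  unfold zz. rewrite Cmod_div by apply den_nz. rewrite Cmod_R, Rabs_pos_eq by lra.
  pose proof (re_le_Cmod (Cplus s (RtoC (rho + 1)))) as H.
  rewrite re_plus, re_RtoC in H. rewrite Rabs_pos_eq in H by lra.
  apply Rmult_le_reg_r with (Cmod (Cplus s (RtoC (rho + 1)))). lra.
  unfold Rdiv. rewrite Rmult_assoc, Rinv_l by lra. lra.
Qed.

Definition es (n b : nat) : C := estar rho q s n b.

Lemma es_eq n b : es n b = CSeries (fun k => Cmult (RtoC (absp rho q k n b)) (Cpow zz k)).
Proof.
  unfold es, estar. apply f_equal. apply functional_extensionality. intros k. unfold zz. rewrite Cpow_CC. reflexivity.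
Qed.

Lemma es_CIS n b : CIS (fun k => Cmult (RtoC (absp rho q k n b)) (Cpow zz k)) (es n b) /\ Cmod (es n b) <= 1.
Proof.
  destruct (absp_sum_ex rho q Hrho Hq n b) as [Hex Hle].
  assert (Hb : forall k, Cmod (Cmult (RtoC (absp rho q k n b)) (Cpow zz k)) <= absp rho q k n b).
  { intros k. rewrite Cmod_mult, Cmod_R. rewrite Rabs_pos_eq by apply (absp_bounds rho q Hrho Hq).
    pose proof (absp_bounds rho q Hrho Hq k n b). rewrite Cmod_pow.
    assert (Cmod zz ^ k <= 1). { rewrite <- (pow1 k). apply pow_incr. split. apply Cmod_ge_0. apply zz_bound. }
    pose proof (pow_le (Cmod zz) k (Cmod_ge_0 _)). nra. }
  destruct (CIS_ex _ _ Hb Hex) as [l Hl].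
  rewrite es_eq. rewrite (CSeries_correct _ _ Hl). split; auto.
  eapply Rle_trans. apply (CIS_norm_le _ _ _ _ Hl (Series_correct _ Hex) Hb). auto.
Qed.

Lemma es_0 n : es n 0 = RtoC 1.
Proof.
  rewrite es_eq. apply CSeries_correct.
  replace (RtoC 1) with (Cplus (Cmult (RtoC (absp rho q 0 n 0)) (Cpow zz 0)) (RtoC 0)) by (simpl; ring).
  apply CIS_cons. apply (CIS_ext (fun _ => RtoC 0)). intros k. simpl. ring. apply CIS_zero.
Qed.

Definition Bq (n b : nat) : C := CSeries (fun j => Cmult (Cpow (RtoC q) j) (es (n + S j) b)).

Lemma Bq_CIS n b : CIS (fun j => Cmult (Cpow (RtoC q) j) (es (n + S j) b)) (Bq n b) /\
  Cmod (Bq n b) <= / (1 - q).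
Proof.
  assert (Hb : forall j, Cmod (Cmult (Cpow (RtoC q) j) (es (n + S j) b)) <= q ^ j).
  { intros j. rewrite Cmod_mult, Cmod_pow, Cmod_R, Rabs_pos_eq by lra.
    pose proof (proj2 (es_CIS (n + S j) b)). pose proof (pow_le q j ltac:(lra)).
    pose proof (Cmod_ge_0 (es (n + S j) b)). nra. }
  assert (G : is_series (fun j => q ^ j) (/ (1 - q))).
  { apply is_series_geom. rewrite Rabs_pos_eq; lra. }
  destruct (CIS_ex _ _ Hb (ex_intro _ _ G)) as [l Hl].
  unfold Bq. rewrite (CSeries_correct _ _ Hl). split; auto.
  apply (CIS_norm_le _ _ _ _ Hl G Hb).
Qed.

Lemma es_rec n b : Cmult (Cplus s (RtoC (rho + 1))) (es n (S b)) =
  Cplus (Cmult (RtoC (rho * (1 - q))) (Bq n (S b)))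
    (Cplus (Cmult (RtoC (INR n / INR (n + S b))) (es (Nat.pred n) (S b)))
           (Cmult (RtoC (INR (S b) / INR (n + S b))) (es n b))).
Proof.
  set (w1 := INR n / INR (n + S b)). set (w2 := INR (S b) / INR (n + S b)).
  set (g := fun j : nat => (1 - q) * q ^ j).
  assert (P1 : CIS (fun k => Cmult (RtoC (Series (fun j => g j * absp rho q k (n + S j) (S b)))) (Cpow zz k))
                   (Cmult (RtoC (1 - q)) (Bq n (S b)))).
  { apply (Fubini (fun k j => Cmult (RtoC (g j * absp rho q k (n + S j) (S b))) (Cpow zz k))
                  (fun k j => g j * absp rho q k (n + S j) (S b))
                  (fun j => g j * Series (fun k => absp rho q k (n + S j) (S b)))
                  _ (fun j => Cmult (RtoC (g j)) (es (n + S j) (S b)))).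
    - intros k j. rewrite Cmod_mult, Cmod_R, Cmod_pow.
      assert (0 <= g j * absp rho q k (n + S j) (S b)).
      { unfold g. pose proof (absp_bounds rho q Hrho Hq k (n + S j) (S b)).
        pose proof (pow_le q j ltac:(lra)). assert (0 <= 1 - q) by lra.
        apply Rmult_le_pos. apply Rmult_le_pos; auto. apply H. }
      rewrite Rabs_pos_eq by auto.
      assert (Cmod zz ^ k <= 1). { rewrite <- (pow1 k). apply pow_incr. split. apply Cmod_ge_0. apply zz_bound. }
      pose proof (pow_le (Cmod zz) k (Cmod_ge_0 _)). nra.
    - intros j. apply (is_series_Rscal (g j)). apply Series_correct.
      apply (absp_sum_ex rho q Hrho Hq).
    - apply (ex_series_le (K:=R_AbsRing) (V:=R_CompleteNormedModule) _ g).
      intros j. change (Rabs (g j * Series (fun k => absp rho q k (n + S j) (S b))) <= g j).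
      destruct (absp_sum_ex rho q Hrho Hq (n + S j) (S b)) as [Hex Hle].
      assert (0 <= Series (fun k => absp rho q k (n + S j) (S b))).
      { apply Series_nonneg; auto. intros; apply absp_bounds; auto. }
      assert (0 <= g j) by (unfold g; apply Rmult_le_pos; [lra|apply pow_le; lra]).
      rewrite Rabs_pos_eq by nra. nra.
      exists 1. apply geo_is; auto.
    - intros k. apply (CIS_ext (fun j => Cmult (Cpow zz k) (RtoC (g j * absp rho q k (n + S j) (S b))))).
      intros j; ring.
      rewrite Cmult_comm. apply CIS_scal. apply RtoC_CIS. apply Series_correct.
      apply (absp_inner_ex rho q Hrho Hq).
    - intros j. apply (CIS_ext (fun k => Cmult (RtoC (g j)) (Cmult (RtoC (absp rho q k (n + S j) (S b))) (Cpow zz k)))).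
      intros k. rewrite RtoC_mult. ring.
      apply CIS_scal. apply es_CIS.
    - apply (CIS_ext (fun j => Cmult (RtoC (1 - q)) (Cmult (Cpow (RtoC q) j) (es (n + S j) (S b))))).
      intros j. unfold g. rewrite RtoC_mult, RtoC_pow. ring.
      apply CIS_scal. apply Bq_CIS. }
  pose proof (proj1 (es_CIS (Nat.pred n) (S b))) as P2.
  pose proof (proj1 (es_CIS n b)) as P3.
  set (T := fun k => Cmult zz (Cplus (Cmult (RtoC (rho / (rho + 1)))
                 (Cmult (RtoC (Series (fun j => g j * absp rho q k (n + S j) (S b)))) (Cpow zz k)))
            (Cmult (RtoC (/ (rho + 1))) (Cplus (Cmult (RtoC w1) (Cmult (RtoC (absp rho q k (Nat.pred n) (S b))) (Cpow zz k)))
                    (Cmult (RtoC w2) (Cmult (RtoC (absp rho q k n b)) (Cpow zz k))))))).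
  assert (HT : CIS T (Cmult zz (Cplus (Cmult (RtoC (rho / (rho + 1))) (Cmult (RtoC (1 - q)) (Bq n (S b))))
            (Cmult (RtoC (/ (rho + 1))) (Cplus (Cmult (RtoC w1) (es (Nat.pred n) (S b))) (Cmult (RtoC w2) (es n b))))))).
  { apply CIS_scal. apply CIS_plus. apply CIS_scal; auto. apply CIS_scal. apply CIS_plus; apply CIS_scal; auto. }
  assert (HE : CIS T (es n (S b))).
  { pose proof (proj1 (es_CIS n (S b))) as H0.
    apply CIS_shift in H0. 2:{ simpl. ring. }
    revert H0. apply CIS_ext. intros k. unfold T.
    rewrite absp_S. fold g. fold w1 w2.
    rewrite (Series_ext (fun j => (1 - q) * q ^ j * absp rho q k (n + S j) (S b))
                        (fun j => g j * absp rho q k (n + S j) (S b))) by auto.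
    simpl Cpow. rewrite !RtoC_plus, !RtoC_mult. rewrite ?RtoC_plus, ?RtoC_mult. set (Z := (zz ^ k)%C). set (SS := Series _). ring. }
  rewrite (CIS_unique _ _ _ HE HT).
  pose proof den_nz as Hd.
  unfold zz. rewrite RtoC_mult, RtoC_div, RtoC_inv, RtoC_minus by lra. field. split; auto.
  intros E. apply (f_equal Re) in E. rewrite re_RtoC in E. simpl in E. lra.
Qed.

End Estar.

Definition LO (f : C -> C) (x l : C) : Prop :=
  forall e, 0 < e -> exists d, 0 < d /\ forall y, Cmod (y - x)%C < d ->
    Cmod (f y - f x - (y - x) * l)%C <= e * Cmod (y - x)%C.

Lemma CisD_LO f x l : CisD f x l <-> LO f x l.
Proof.
  split.
  - intros [_ H] e He.
    specialize (H x (fun P HP => HP) (mkposreal _ He)).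
    apply (locally_le_locally_norm (K:=C_AbsRing) (V:=AbsRing_NormedModule C_AbsRing)) in H.
    destruct H as [d Hd]. exists d. split. apply cond_pos.
    intros y Hy. apply (Hd y). exact Hy.
  - intros H. unfold CisD, is_derive, filterdiff. split.
    + apply is_linear_scal_l.
    + intros z Hz. apply (is_filter_lim_locally_unique (K:=C_AbsRing) (V:=AbsRing_NormedModule C_AbsRing)) in Hz. subst z.
      intros e. apply (locally_norm_le_locally (K:=C_AbsRing) (V:=AbsRing_NormedModule C_AbsRing)).
      destruct (H e (cond_pos e)) as [d [Hd Hy]].
      exists (mkposreal _ Hd). intros y Hy'. apply Hy. exact Hy'.
Qed.

Lemma CisD_ext_loc f g x l d : 0 < d -> (forall y, Cmod (y - x)%C < d -> f y = g y) ->
  CisD f x l -> CisD g x l.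
Proof.
  intros Hd Hfg H. apply CisD_LO in H. apply CisD_LO.
  intros e He. destruct (H e He) as [d' [Hd' H']].
  exists (Rmin d d'). split. apply Rmin_pos; auto.
  intros y Hy. pose proof (Rmin_r d d'). pose proof (Rmin_l d d').
  assert (Hx0 : Cmod (x - x)%C < d) by (replace (x - x)%C with (RtoC 0) by ring; rewrite Cmod_0; auto).
  rewrite <- (Hfg y) by lra. rewrite <- (Hfg x) by auto. apply H'. lra.
Qed.

Lemma CisD_const (a x : C) : CisD (fun _ => a) x (RtoC 0).
Proof.
  apply CisD_LO. intros e He. exists 1. split. lra. intros y Hy.
  replace (a - a - (y - x) * 0)%C with (RtoC 0) by ring. rewrite Cmod_0.
  pose proof (Cmod_ge_0 (y - x)%C). nra.
Qed.

Lemma CisD_id (x : C) : CisD (fun y => y) x (RtoC 1).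
Proof.
  apply CisD_LO. intros e He. exists 1. split. lra. intros y Hy.
  replace (y - x - (y - x) * 1)%C with (RtoC 0) by ring. rewrite Cmod_0.
  pose proof (Cmod_ge_0 (y - x)%C). nra.
Qed.

Lemma CisD_plus f g x lf lg : CisD f x lf -> CisD g x lg -> CisD (fun y => f y + g y)%C x (lf + lg)%C.
Proof.
  rewrite !CisD_LO. intros Hf Hg e He.
  destruct (Hf (e/2) ltac:(lra)) as [d1 [Hd1 H1]]. destruct (Hg (e/2) ltac:(lra)) as [d2 [Hd2 H2]].
  exists (Rmin d1 d2). split. apply Rmin_pos; auto. intros y Hy.
  pose proof (Rmin_r d1 d2). pose proof (Rmin_l d1 d2).
  replace (f y + g y - (f x + g x) - (y - x) * (lf + lg))%C with
    ((f y - f x - (y - x) * lf) + (g y - g x - (y - x) * lg))%C by ring.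
  eapply Rle_trans. apply Cmod_triangle.
  pose proof (H1 y ltac:(lra)). pose proof (H2 y ltac:(lra)). lra.
Qed.

Lemma CisD_scal (c : C) f x l : CisD f x l -> CisD (fun y => c * f y)%C x (c * l)%C.
Proof.
  rewrite !CisD_LO. intros Hf e He.
  destruct (Hf (e / (Cmod c + 1))) as [d [Hd H]].
  { apply Rdiv_lt_0_compat; auto. pose proof (Cmod_ge_0 c). lra. }
  exists d. split; auto. intros y Hy.
  replace (c * f y - c * f x - (y - x) * (c * l))%C with (c * (f y - f x - (y - x) * l))%C by ring.
  rewrite Cmod_mult. specialize (H y Hy).
  pose proof (Cmod_ge_0 c). pose proof (Cmod_ge_0 (y - x)%C). pose proof (Cmod_ge_0 (f y - f x - (y - x) * l)%C).
  assert (Cmod c * Cmod (f y - f x - (y - x) * l)%C <= Cmod c * (e / (Cmod c + 1) * Cmod (y - x)%C)).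
  { apply Rmult_le_compat_l; auto. }
  assert (Cmod c * (e / (Cmod c + 1)) <= e).
  { assert (E : Cmod c * (e / (Cmod c + 1)) = e - e / (Cmod c + 1)) by (field; lra).
    assert (0 < e / (Cmod c + 1)) by (apply Rdiv_lt_0_compat; lra). lra. }
  nra.
Qed.

Lemma CisD_mult f g x lf lg : CisD f x lf -> CisD g x lg ->
  CisD (fun y => f y * g y)%C x (lf * g x + f x * lg)%C.
Proof.
  rewrite !CisD_LO. intros Hf Hg e He.
  set (G := Cmod (g x) + Cmod lg + 1).
  set (Fx := Cmod (f x) + 1).
  set (Lf := (Cmod lf + 1) * (Cmod lg + 1)).
  pose proof (Cmod_ge_0 (g x)). pose proof (Cmod_ge_0 lg). pose proof (Cmod_ge_0 (f x)). pose proof (Cmod_ge_0 lf).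
  assert (HG : 0 < G) by (unfold G; lra). assert (HFx : 0 < Fx) by (unfold Fx; lra).
  assert (HLf : 0 < Lf) by (unfold Lf; apply Rmult_lt_0_compat; lra).
  destruct (Hg 1 ltac:(lra)) as [d0 [Hd0 Hq0]].
  destruct (Hf (e / 3 / G)) as [d1 [Hd1 Hq1]]. { apply Rdiv_lt_0_compat; lra. }
  destruct (Hg (e / 3 / Fx)) as [d2 [Hd2 Hq2]]. { apply Rdiv_lt_0_compat; lra. }
  set (d3 := Rmin 1 (e / 3 / Lf)).
  assert (Hd3 : 0 < d3). { apply Rmin_pos. lra. apply Rdiv_lt_0_compat; lra. }
  exists (Rmin (Rmin d0 d1) (Rmin d2 d3)). split.
  { apply Rmin_pos; apply Rmin_pos; auto. }
  intros y Hy.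
  pose proof (Rmin_l (Rmin d0 d1) (Rmin d2 d3)). pose proof (Rmin_r (Rmin d0 d1) (Rmin d2 d3)).
  pose proof (Rmin_l d0 d1). pose proof (Rmin_r d0 d1). pose proof (Rmin_l d2 d3). pose proof (Rmin_r d2 d3).
  assert (d3 <= 1) by apply Rmin_l. assert (d3 <= e / 3 / Lf) by apply Rmin_r.
  specialize (Hq0 y ltac:(lra)). specialize (Hq1 y ltac:(lra)). specialize (Hq2 y ltac:(lra)).
  set (h := (y - x)%C) in *. set (nh := Cmod h) in *. assert (Hnh : 0 <= nh) by apply Cmod_ge_0.
  assert (Hgd : Cmod (g y - g x)%C <= (Cmod lg + 1) * nh).
  { replace (g y - g x)%C with ((g y - g x - h * lg) + h * lg)%C by ring.
    eapply Rle_trans. apply Cmod_triangle. rewrite Cmod_mult. fold nh. lra. }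
  assert (Hgy : Cmod (g y) <= G).
  { replace (g y) with (g x + (g y - g x))%C by ring. eapply Rle_trans. apply Cmod_triangle.
    unfold G. assert ((Cmod lg + 1) * nh <= Cmod lg + 1) by nra. lra. }
  replace (f y * g y - f x * g x - h * (lf * g x + f x * lg))%C with
    ((f y - f x - h * lf) * g y + h * lf * (g y - g x) + f x * (g y - g x - h * lg))%C by (unfold h; ring).
  eapply Rle_trans. apply Cmod_triangle. rewrite Cmod_mult.
  eapply Rle_trans. apply Rplus_le_compat_r. apply Cmod_triangle. rewrite !Cmod_mult. fold nh.
  pose proof (Cmod_ge_0 (f y - f x - h * lf)%C). pose proof (Cmod_ge_0 (g y)).
  pose proof (Cmod_ge_0 (g y - g x)%C). pose proof (Cmod_ge_0 (g y - g x - h * lg)%C).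
  assert (A1 : Cmod (f y - f x - h * lf)%C * Cmod (g y) <= e / 3 * nh).
  { eapply Rle_trans. apply Rmult_le_compat; eauto. 
    replace (e / 3 / G * nh * G) with (e / 3 * nh) by (field; lra). lra. }
  assert (A2 : nh * Cmod lf * Cmod (g y - g x)%C <= e / 3 * nh).
  { eapply Rle_trans. apply Rmult_le_compat_l. nra. apply Hgd.
    replace (nh * Cmod lf * ((Cmod lg + 1) * nh)) with (nh * (Cmod lf * (Cmod lg + 1) * nh)) by ring.
    rewrite (Rmult_comm (e / 3) nh). apply Rmult_le_compat_l; auto.
    assert (Cmod lf * (Cmod lg + 1) <= Lf) by (unfold Lf; nra).
    assert (Hn3 : nh <= e / 3 / Lf) by lra.
    assert (Lf * nh <= e / 3).
    { apply Rmult_le_compat_l with (r := Lf) in Hn3; [|lra].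
      replace (Lf * (e / 3 / Lf)) with (e / 3) in Hn3 by (field; lra). lra. }
    nra. }
  assert (A3 : Cmod (f x) * Cmod (g y - g x - h * lg)%C <= e / 3 * nh).
  { eapply Rle_trans. apply Rmult_le_compat_l. auto. apply Hq2.
    replace (Cmod (f x) * (e / 3 / Fx * nh)) with ((Cmod (f x) / Fx) * (e / 3 * nh)) by (field; lra).
    assert (Cmod (f x) / Fx <= 1).
    { assert (E : Cmod (f x) / Fx = 1 - 1 / Fx) by (unfold Fx; field; lra).
      assert (0 < 1 / Fx) by (apply Rdiv_lt_0_compat; lra). lra. }
    assert (0 <= e / 3 * nh) by nra. nra. }
  lra.
Qed.

Lemma ball_in_D (x : C) : Cmod x < 1 -> forall y, Cmod (y - x)%C < 1 - Cmod x -> Cmod y < 1.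
Proof.
  intros Hx y Hy. replace y with (x + (y - x))%C by ring.
  eapply Rle_lt_trans. apply Cmod_triangle. lra.
Qed.

Definition shu (c : nat -> nat -> C) (n m : nat) : C :=
  match n with O => RtoC 0 | S n' => c n' m end.
Definition shv (c : nat -> nat -> C) (n m : nat) : C :=
  match m with O => RtoC 0 | S m' => c n m' end.

Lemma ex_r (x y : C) : Cmod x < 1 -> Cmod y < 1 ->
  exists r, 0 < r < 1 /\ Cmod x <= r /\ Cmod y <= r.
Proof.
  intros Hx Hy. exists ((1 + Rmax (Cmod x) (Cmod y)) / 2).
  pose proof (Rmax_l (Cmod x) (Cmod y)). pose proof (Rmax_r (Cmod x) (Cmod y)).
  pose proof (Cmod_ge_0 x). assert (Rmax (Cmod x) (Cmod y) < 1) by (apply Rmax_lub_lt; auto).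
  repeat split; lra.
Qed.

Lemma CB_mono c K p p' : (p <= p')%nat -> CB c K p -> CB c K p'.
Proof.
  intros Hp [HK H]. split; auto. intros n m. eapply Rle_trans. apply H.
  pose proof (INRS_pow_pos n p). pose proof (INRS_pow_pos m p).
  assert (INR (S n) ^ p <= INR (S n) ^ p') by (apply Rle_pow; auto; apply INRS_ge1).
  assert (INR (S m) ^ p <= INR (S m) ^ p') by (apply Rle_pow; auto; apply INRS_ge1).
  rewrite !Rmult_assoc. apply Rmult_le_compat_l; auto. apply Rmult_le_compat; lra.
Qed.

Lemma CB_plus c1 c2 K1 K2 p : CB c1 K1 p -> CB c2 K2 p -> CB (fun n m => (c1 n m + c2 n m)%C) (K1 + K2) p.
Proof.
  intros [H1 B1] [H2 B2]. split. lra. intros n m. eapply Rle_trans. apply Cmod_triangle.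
  specialize (B1 n m). specialize (B2 n m). lra.
Qed.

Lemma CB_scal z c K p : CB c K p -> CB (fun n m => (z * c n m)%C) (Cmod z * K) p.
Proof.
  intros [H B]. split. apply Rmult_le_pos; auto. apply Cmod_ge_0.
  intros n m. rewrite Cmod_mult. rewrite !Rmult_assoc. apply Rmult_le_compat_l. apply Cmod_ge_0.
  rewrite <- !Rmult_assoc. apply B.
Qed.

Lemma CB_n c K p : CB c K p -> CB (fun n m => (INR n * c n m)%C) K (S p).
Proof.
  intros [H B]. split; auto. intros n m. rewrite Cmod_mult, Cmod_R, Rabs_pos_eq by apply pos_INR.
  specialize (B n m). pose proof (INRS_pow_pos n p). pose proof (INRS_pow_pos m p).
  pose proof (INRS_pow_mono m p). pose proof (pos_INR n). pose proof (Cmod_ge_0 (c n m)).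
  assert (INR n <= INR (S n)) by (rewrite S_INR; lra).
  change (INR (S n) ^ S p) with (INR (S n) * INR (S n) ^ p).
  apply Rle_trans with (INR (S n) * (K * INR (S n) ^ p * INR (S m) ^ p)).
  apply Rmult_le_compat; auto.
  assert (0 <= K * INR (S n) ^ p) by (apply Rmult_le_pos; lra).
  replace (K * (INR (S n) * INR (S n) ^ p) * INR (S m) ^ S p) with
    (INR (S n) * (K * INR (S n) ^ p * INR (S m) ^ S p)) by ring.
  apply Rmult_le_compat_l. lra. apply Rmult_le_compat_l; auto.
Qed.

Lemma CB_m c K p : CB c K p -> CB (fun n m => (INR m * c n m)%C) K (S p).
Proof.
  intros [H B]. split; auto. intros n m. rewrite Cmod_mult, Cmod_R, Rabs_pos_eq by apply pos_INR.
  specialize (B n m). pose proof (INRS_pow_pos n p). pose proof (INRS_pow_pos m p).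
  pose proof (INRS_pow_mono n p). pose proof (pos_INR m). pose proof (Cmod_ge_0 (c n m)).
  assert (INR m <= INR (S m)) by (rewrite S_INR; lra).
  change (INR (S m) ^ S p) with (INR (S m) * INR (S m) ^ p).
  apply Rle_trans with (INR (S m) * (K * INR (S n) ^ p * INR (S m) ^ p)).
  apply Rmult_le_compat; auto.
  assert (0 <= K * INR (S n) ^ S p) by (apply Rmult_le_pos; lra).
  replace (K * INR (S n) ^ S p * (INR (S m) * INR (S m) ^ p)) with
    (INR (S m) * (K * INR (S n) ^ S p * INR (S m) ^ p)) by ring.
  apply Rmult_le_compat_l. lra. apply Rmult_le_compat_r. lra. apply Rmult_le_compat_l; auto.
Qed.

Lemma CB_shu c K p : CB c K p -> CB (shu c) K p.
Proof.
  intros [H B]. split; auto. intros n m. destruct n as [|n]; simpl shu.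
  - rewrite Cmod_0. pose proof (INRS_pow_pos 0 p). pose proof (INRS_pow_pos m p).
    apply Rmult_le_pos; [apply Rmult_le_pos|]; lra.
  - eapply Rle_trans. apply B. pose proof (INRS_pow_pos n p). pose proof (INRS_pow_pos m p).
    assert (INR (S n) ^ p <= INR (S (S n)) ^ p).
    { apply pow_incr. split. pose proof (INRS_ge1 n); lra. rewrite (S_INR (S n)). lra. }
    apply Rmult_le_compat_r. lra. apply Rmult_le_compat_l; auto.
Qed.

Lemma CB_shv c K p : CB c K p -> CB (shv c) K p.
Proof.
  intros [H B]. split; auto. intros n m. destruct m as [|m]; simpl shv.
  - rewrite Cmod_0. pose proof (INRS_pow_pos 0 p). pose proof (INRS_pow_pos n p).
    apply Rmult_le_pos; [apply Rmult_le_pos|]; lra.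
  - eapply Rle_trans. apply B. pose proof (INRS_pow_pos n p). pose proof (INRS_pow_pos m p).
    assert (INR (S m) ^ p <= INR (S (S m)) ^ p).
    { apply pow_incr. split. pose proof (INRS_ge1 m); lra. rewrite (S_INR (S m)). lra. }
    apply Rmult_le_compat_l; auto. apply Rmult_le_pos; auto. lra.
Qed.

Section DSalg.
Variables (x y : C).
Hypothesis Hx : Cmod x < 1.
Hypothesis Hy : Cmod y < 1.

Lemma DS_ext c1 c2 : (forall n m, c1 n m = c2 n m) -> DS c1 x y = DS c2 x y.
Proof. intros H. unfold DS. apply D2_ext. intros n m. rewrite H. auto. Qed.

Lemma DS_plus c1 c2 K1 K2 p : CB c1 K1 p -> CB c2 K2 p ->
  DS (fun n m => (c1 n m + c2 n m)%C) x y = (DS c1 x y + DS c2 x y)%C.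
Proof.
  intros H1 H2. destruct (ex_r x y Hx Hy) as [r [Hr [Hxr Hyr]]].
  unfold DS. rewrite <- (D2_plus _ _ _ _ _ _ Hr (DS_terms_bound c1 K1 p r x y H1 ltac:(lra) Hxr Hyr)
    (DS_terms_bound c2 K2 p r x y H2 ltac:(lra) Hxr Hyr)).
  apply D2_ext. intros; ring.
Qed.

Lemma DS_minus c1 c2 K1 K2 p : CB c1 K1 p -> CB c2 K2 p ->
  DS (fun n m => (c1 n m - c2 n m)%C) x y = (DS c1 x y - DS c2 x y)%C.
Proof.
  intros H1 H2. destruct (ex_r x y Hx Hy) as [r [Hr [Hxr Hyr]]].
  unfold DS. rewrite <- (D2_minus _ _ _ _ _ _ Hr (DS_terms_bound c1 K1 p r x y H1 ltac:(lra) Hxr Hyr)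
    (DS_terms_bound c2 K2 p r x y H2 ltac:(lra) Hxr Hyr)).
  apply D2_ext. intros; ring.
Qed.

Lemma DS_scal z c K p : CB c K p -> DS (fun n m => (z * c n m)%C) x y = (z * DS c x y)%C.
Proof.
  intros H1. destruct (ex_r x y Hx Hy) as [r [Hr [Hxr Hyr]]].
  unfold DS. rewrite <- (D2_scal z _ _ _ _ Hr (DS_terms_bound c K p r x y H1 ltac:(lra) Hxr Hyr)).
  apply D2_ext. intros; ring.
Qed.

Lemma DSu_mul c K p : CB c K p -> (x * DSu c x y)%C = DS (fun n m => (INR n * c n m)%C) x y.
Proof.
  intros H1. destruct (ex_r x y Hx Hy) as [r [Hr [Hxr Hyr]]].
  unfold DSu, DS. rewrite <- (D2_scal x _ _ _ _ Hr (DSu_terms_bound c K p r x y H1 ltac:(lra) Hxr Hyr)).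
  apply D2_ext. intros n m. destruct n; simpl. ring. ring.
Qed.

Lemma DSv_mul c K p : CB c K p -> (y * DSv c x y)%C = DS (fun n m => (INR m * c n m)%C) x y.
Proof.
  intros H1. destruct (ex_r x y Hx Hy) as [r [Hr [Hxr Hyr]]].
  unfold DSv, DS. rewrite <- (D2_scal y _ _ _ _ Hr (DSv_terms_bound c K p r x y H1 ltac:(lra) Hxr Hyr)).
  apply D2_ext. intros n m. destruct m; simpl. ring. ring.
Qed.

Lemma CSeries_zero : CSeries (fun _ => RtoC 0) = RtoC 0.
Proof. apply CSeries_correct. apply CIS_zero. Qed.

Lemma D2_shift_n a K p r : 0 < r < 1 -> (forall m, a 0%nat m = RtoC 0) ->
  Dbound (fun n m => a (S n) m) K p r -> D2 a = D2 (fun n m => a (S n) m).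
Proof.
  intros Hr H0 Hb. destruct (D2_conv _ _ _ _ Hr Hb) as [_ [_ [Ho _]]].
  unfold D2 at 1. apply CSeries_correct. apply CIS_unshift. exact Ho.
  assert (E : a 0%nat = fun _ => RtoC 0) by (apply functional_extensionality; auto).
  rewrite E. apply CSeries_zero.
Qed.

Lemma D2_shift_m a K p r : 0 < r < 1 -> (forall n, a n 0%nat = RtoC 0) ->
  Dbound (fun n m => a n (S m)) K p r -> D2 a = D2 (fun n m => a n (S m)).
Proof.
  intros Hr H0 Hb. destruct (D2_conv _ _ _ _ Hr Hb) as [Hi _].
  unfold D2. f_equal. apply functional_extensionality. intros n.
  apply CSeries_correct. apply CIS_unshift. apply Hi. auto.
Qed.

Lemma DS_shu c K p : CB c K p -> (x * DS c x y)%C = DS (shu c) x y.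
Proof.
  intros H1. destruct (ex_r x y Hx Hy) as [r [Hr [Hxr Hyr]]].
  pose proof (DS_terms_bound c K p r x y H1 ltac:(lra) Hxr Hyr) as Hb.
  unfold DS. rewrite <- (D2_scal x _ _ _ _ Hr Hb).
  rewrite (D2_shift_n (fun n m => (shu c n m * (x ^ n * y ^ m))%C) (Cmod x * K) p r Hr).
  - apply D2_ext. intros n m. simpl. ring.
  - intros m. simpl. ring.
  - intros n m. simpl shu. replace (c n m * (x ^ S n * y ^ m))%C with (x * (c n m * (x ^ n * y ^ m)))%C by (simpl; ring).
    apply (Dbound_scal _ _ _ r x ltac:(lra) Hb).
Qed.

Lemma DS_shv c K p : CB c K p -> (y * DS c x y)%C = DS (shv c) x y.
Proof.
  intros H1. destruct (ex_r x y Hx Hy) as [r [Hr [Hxr Hyr]]].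
  pose proof (DS_terms_bound c K p r x y H1 ltac:(lra) Hxr Hyr) as Hb.
  unfold DS. rewrite <- (D2_scal y _ _ _ _ Hr Hb).
  rewrite (D2_shift_m (fun n m => (shv c n m * (x ^ n * y ^ m))%C) (Cmod y * K) p r Hr).
  - apply D2_ext. intros n m. simpl. ring.
  - intros n. simpl. ring.
  - intros n m. simpl shv. replace (c n m * (x ^ n * y ^ S m))%C with (y * (c n m * (x ^ n * y ^ m)))%C by (simpl; ring).
    apply (Dbound_scal _ _ _ r y ltac:(lra) Hb).
Qed.

Definition ind1 (n m : nat) : C := match m with 1%nat => RtoC 1 | _ => RtoC 0 end.

Lemma DS_ind : DS ind1 x y = (y / (1 - x))%C.
Proof.
  unfold DS, D2.
  assert (E : (fun n => CSeries (fun m => (ind1 n m * (x ^ n * y ^ m))%C)) = (fun n => (y * x ^ n)%C)).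
  { apply functional_extensionality. intros n. apply CSeries_correct.
    apply CIS_unshift. 2:{ simpl. ring. }
    replace (y * x ^ n)%C with ((ind1 n 1 * (x ^ n * y ^ 1)) + 0)%C by (simpl; ring).
    apply CIS_cons. apply (CIS_ext (fun _ => RtoC 0)). intros m. simpl. ring. apply CIS_zero. }
  rewrite E. apply CSeries_correct.
  replace (y / (1 - x))%C with (y * / (1 - x))%C by auto.
  apply CIS_scal. apply CIS_geom. auto.
Qed.

End DSalg.

Lemma DS_indep c x x' y : (forall n m, n <> 0%nat -> c n m = RtoC 0) -> DS c x y = DS c x' y.
Proof.
  intros H. unfold DS. apply D2_ext. intros n m. destruct n. simpl. ring.
  rewrite H by lia. ring.
Qed.

Lemma CisD_eq f x l l' : CisD f x l -> l = l' -> CisD f x l'.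
Proof. intros H E; subst; auto. Qed.

Lemma CisD_ext f g x l : (forall y, f y = g y) -> CisD f x l -> CisD g x l.
Proof. intros H. apply (CisD_ext_loc f g x l 1). lra. intros; auto. Qed.

Lemma CisD_minus f g x lf lg : CisD f x lf -> CisD g x lg -> CisD (fun y => f y - g y)%C x (lf - lg)%C.
Proof.
  intros Hf Hg. pose proof (CisD_scal (Copp (RtoC 1)) g x lg Hg) as Hg'.
  pose proof (CisD_plus _ _ _ _ _ Hf Hg') as H.
  eapply CisD_eq. eapply CisD_ext. 2: exact H. intros y; simpl. ring. ring.
Qed.

Section Main.
Variables (rho q : R) (s : C).
Hypothesis Hrho : 0 < rho.
Hypothesis Hq : 0 < q < 1.
Hypothesis Hs : 0 <= Re s.

Definition eh (n m : nat) : C := match m with O => RtoC 0 | S _ => es rho q s n m end.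
Definition Bc (n m : nat) : C := match m with O => RtoC 0 | S _ => Bq rho q s n m end.
Definition dl (n m : nat) : C := match n with
  | O => match m with O => RtoC 0 | S _ => (es rho q s 0 m + q * Bq rho q s 0 m)%C end
  | S _ => RtoC 0 end.
Definition FS (x y : C) : C := DS Bc x y.
Definition EE (x y : C) : C := DS eh x y.

Lemma one_le_pow n p : 1 <= INR (S n) ^ p.
Proof. rewrite <- (pow1 p). apply pow_incr. split. lra. apply INRS_ge1. Qed.

Lemma CB_const_bound (c : nat -> nat -> C) K : 0 <= K -> (forall n m, Cmod (c n m) <= K) -> CB c K 0.
Proof. intros HK H. split; auto. intros n m. simpl. rewrite !Rmult_1_r. auto. Qed.

Lemma CB_eh : CB eh 1 0.
Proof.
  apply CB_const_bound. lra. intros n m. destruct m; simpl. rewrite Cmod_0; lra.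
  apply (es_CIS rho q s Hrho Hq Hs).
Qed.

Lemma CB_Bc : CB Bc (/ (1 - q)) 0.
Proof.
  apply CB_const_bound. apply Rlt_le, Rinv_0_lt_compat. lra. intros n m. destruct m; simpl.
  rewrite Cmod_0. apply Rlt_le, Rinv_0_lt_compat. lra.
  apply (Bq_CIS rho q s Hrho Hq Hs).
Qed.

Lemma CB_dl : CB dl (1 + q * / (1 - q)) 0.
Proof.
  assert (0 <= q * / (1 - q)) by (apply Rmult_le_pos; [lra| apply Rlt_le, Rinv_0_lt_compat; lra]).
  apply CB_const_bound. lra. intros n m. destruct n; simpl. destruct m; simpl.
  rewrite Cmod_0; lra.
  eapply Rle_trans. apply Cmod_triangle. rewrite Cmod_mult, Cmod_R, Rabs_pos_eq by lra.
  pose proof (proj2 (es_CIS rho q s Hrho Hq Hs 0 (S m))).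
  pose proof (proj2 (Bq_CIS rho q s Hrho Hq Hs 0 (S m))).
  assert (q * Cmod (Bq rho q s 0 (S m)) <= q * / (1 - q)) by (apply Rmult_le_compat_l; lra). lra.
  rewrite Cmod_0; lra.
Qed.

Lemma Egen_eq x y : Cmod x < 1 -> Cmod y < 1 -> Egen rho q s x y = EE x y.
Proof.
  intros Hx Hy. destruct (ex_r x y Hx Hy) as [r [Hr [Hxr Hyr]]].
  pose proof (DS_terms_bound eh 1 0 r x y CB_eh ltac:(lra) Hxr Hyr) as Hb.
  destruct (D2_conv _ _ _ _ Hr Hb) as [Hi _].
  unfold Egen, EE, DS, D2. f_equal. apply functional_extensionality. intros n.
  apply CSeries_correct.
  specialize (Hi n). apply CIS_shift in Hi. 2:{ simpl. ring. }
  revert Hi. apply CIS_ext. intros m. unfold eh, es. rewrite (Cpow_CC x n), (Cpow_CC y (S m)). reflexivity.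
Qed.

Lemma Bq_step n m : Bq rho q s n m = (es rho q s (S n) m + q * Bq rho q s (S n) m)%C.
Proof.
  pose proof (proj1 (Bq_CIS rho q s Hrho Hq Hs n m)) as H1.
  pose proof (proj1 (Bq_CIS rho q s Hrho Hq Hs (S n) m)) as H2.
  apply (CIS_scal (RtoC q)) in H2.
  assert (H3 : CIS (fun j => (q ^ j * es rho q s (n + S j) m)%C)
      (((RtoC q) ^ 0 * es rho q s (n + 1) m) + q * Bq rho q s (S n) m)%C).
  { apply (CIS_cons (fun j => (q ^ j * es rho q s (n + S j) m)%C)).
    revert H2. apply CIS_ext. intros j. replace (n + S (S j))%nat with (S n + S j)%nat by lia.
    simpl. ring. }
  rewrite (CIS_unique _ _ _ H1 H3). replace (n + 1)%nat with (S n) by lia. simpl. ring.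
Qed.

Lemma coef_id n m : (shu Bc n m - q * Bc n m)%C = (eh n m - dl n m)%C.
Proof.
  destruct n as [|n]; destruct m as [|m]; simpl; try ring.
  rewrite (Bq_step n (S m)). ring.
Qed.

Lemma KeyRel x y : Cmod x < 1 -> Cmod y < 1 -> ((x - q) * FS x y)%C = (EE x y - EE q y)%C.
Proof.
  intros Hx Hy.
  assert (Hqd : Cmod (RtoC q) < 1) by (rewrite Cmod_R, Rabs_pos_eq; lra).
  assert (G : forall x, Cmod x < 1 -> ((x - q) * FS x y)%C = (EE x y - DS dl x y)%C).
  { intros x' Hx'. pose proof Hy as Hy'. unfold FS, EE.
    replace ((x' - q) * DS Bc x' y)%C with (x' * DS Bc x' y - q * DS Bc x' y)%C by ring.
    rewrite (DS_shu x' y Hx' Hy' Bc _ _ CB_Bc).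
    rewrite <- (DS_scal x' y Hx' Hy' (RtoC q) Bc _ _ CB_Bc).
    rewrite <- (DS_minus x' y Hx' Hy' _ _ _ _ _ (CB_shu _ _ _ CB_Bc) (CB_scal (RtoC q) _ _ _ CB_Bc)).
    rewrite <- (DS_minus x' y Hx' Hy' _ _ _ _ _ CB_eh (CB_mono _ _ _ _ (le_n 0) CB_dl)).
    apply DS_ext. intros; apply coef_id. }
  pose proof (G (RtoC q) Hqd) as Gq. replace ((q - q) * FS q y)%C with (RtoC 0) in Gq by ring.
  rewrite (G x Hx). rewrite (DS_indep dl x q y). 
  - assert (E : DS dl q y = EE q y).
    { transitivity (EE q y - (EE q y - DS dl q y))%C. ring. rewrite <- Gq. ring. }
    rewrite E. auto.
  - intros n m Hn. destruct n. lia. reflexivity.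
Qed.

Lemma DS_deriv' c K p (al be ga de x0 u v : C) (f : C -> C) : CB c K p ->
  u = (al * x0 + be)%C -> v = (ga * x0 + de)%C -> Cmod u < 1 -> Cmod v < 1 ->
  (forall x, f x = DS c (al * x + be)%C (ga * x + de)%C) ->
  CisD f x0 (al * DSu c u v + ga * DSv c u v)%C.
Proof.
  intros Hc Hu Hv Hu1 Hv1 Hf. subst u v.
  apply (CisD_ext (fun x => DS c (al * x + be)%C (ga * x + de)%C)). intros; auto.
  apply (DS_deriv c K p); auto.
Qed.

Lemma Cmod_q : Cmod (RtoC q) < 1.
Proof. rewrite Cmod_R, Rabs_pos_eq; lra. Qed.

Lemma Ffun_eq x y : Cmod x < 1 -> Cmod y < 1 -> Ffun rho q s x y = FS x y.
Proof.
  intros Hx Hy. unfold Ffun.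
  destruct (Req_EM_T (Re x) q) as [E1|E1]; destruct (Req_EM_T (Im x) 0) as [E2|E2].
  - assert (Ex : x = RtoC q). { destruct x as [a b]. simpl in E1, E2. subst. reflexivity. }
    subst x. unfold dEu. apply CDeriv_correct.
    assert (HF : CisD (fun x => FS x y) q (DSu Bc q y)).
    { eapply CisD_eq. apply (DS_deriv' Bc _ _ (RtoC 1) (RtoC 0) (RtoC 0) y q q y (fun x => FS x y) CB_Bc); auto.
      ring. ring. intros x. unfold FS. f_equal; ring. ring. }
    assert (HL : CisD (fun x => (x - q) * FS x y + EE q y)%C q (FS q y)).
    { eapply CisD_eq. apply CisD_plus. apply CisD_mult. apply CisD_minus. apply CisD_id. apply CisD_const.
      exact HF. apply CisD_const. cbv beta. ring. }
    apply (CisD_ext_loc (fun x => (x - q) * FS x y + EE q y)%C _ _ _ (1 - Cmod (RtoC q))). pose proof Cmod_q; lra.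
    intros x Hxq. pose proof (ball_in_D (RtoC q) Cmod_q x Hxq) as Hx1.
    rewrite (Egen_eq x y Hx1 Hy). rewrite (KeyRel x y Hx1 Hy). ring.
    exact HL.
  - assert (Hne : (x - q)%C <> RtoC 0).
    { intros E. destruct x as [a b]. unfold Cminus, Cplus, Copp, RtoC in E. simpl in *. injection E; intros; lra. }
    rewrite (Egen_eq x y Hx Hy), (Egen_eq q y Cmod_q Hy). rewrite <- (KeyRel x y Hx Hy). field. auto.
  - assert (Hne : (x - q)%C <> RtoC 0).
    { intros E. destruct x as [a b]. unfold Cminus, Cplus, Copp, RtoC in E. simpl in *. injection E; intros; lra. }
    rewrite (Egen_eq x y Hx Hy), (Egen_eq q y Cmod_q Hy). rewrite <- (KeyRel x y Hx Hy). field. auto.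
  - assert (Hne : (x - q)%C <> RtoC 0).
    { intros E. destruct x as [a b]. unfold Cminus, Cplus, Copp, RtoC in E. simpl in *. injection E; intros; lra. }
    rewrite (Egen_eq x y Hx Hy), (Egen_eq q y Cmod_q Hy). rewrite <- (KeyRel x y Hx Hy). field. auto.
Qed.

Lemma es_rec2 n b : ((s + RtoC (rho + 1)) * ((INR n + INR (S b)) * es rho q s n (S b)))%C =
  (RtoC (rho * (1 - q)) * ((INR n + INR (S b)) * Bq rho q s n (S b))
   + INR n * es rho q s (Nat.pred n) (S b) + INR (S b) * es rho q s n b)%C.
Proof.
  pose proof (es_rec rho q s Hrho Hq Hs n b) as H.
  assert (HN : 0 < INR (n + S b)) by (apply lt_0_INR; lia).
  rewrite plus_INR in HN.
  assert (HNc : RtoC (INR n + INR (S b)) <> RtoC 0).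
  { intros E. apply RtoC_inj in E. lra. }
  rewrite plus_INR in H.
  rewrite !RtoC_div in H by lra.
  transitivity ((INR n + INR (S b)) * ((s + RtoC (rho + 1)) * es rho q s n (S b)))%C.
  { rewrite ?RtoC_plus. ring. }
  rewrite H. rewrite !RtoC_plus. field. rewrite <- RtoC_plus. auto.
Qed.

Definition cL (n m : nat) : C := ((s + RtoC (rho + 1)) * (INR n * eh n m + INR m * eh n m))%C.
Definition cR (n m : nat) : C :=
  (RtoC (rho * (1 - q)) * (INR n * Bc n m + INR m * Bc n m)
   + shu (fun n m => INR n * eh n m + eh n m)%C n m
   + shv (fun n m => INR m * eh n m + eh n m)%C n m + ind1 n m)%C.

Lemma coefPDE n m : cL n m = cR n m.
Proof.
  unfold cL, cR. destruct m as [|b].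
  - destruct n; cbn [shu shv ind1 eh Bc]; ring.
  - pose proof (es_rec2 n b) as H. cbn [eh Bc].
    transitivity ((s + RtoC (rho + 1)) * ((INR n + INR (S b)) * es rho q s n (S b)))%C.
    { rewrite RtoC_plus. ring. }
    rewrite H.
    destruct n as [|n]; destruct b as [|b]; cbn [shu shv ind1 eh Bc Nat.pred].
      all: rewrite ?es_0; rewrite ?S_INR; rewrite ?RtoC_plus. all: try (change (INR 0) with 0%R). all: try rewrite RtoC_0. all: ring.
Qed.

Lemma PDE_E x y : Cmod x < 1 -> Cmod y < 1 ->
  ((s + RtoC (rho + 1)) * (x * DSu eh x y + y * DSv eh x y))%C =
  (RtoC (rho * (1 - q)) * (x * DSu Bc x y + y * DSv Bc x y)
   + x * (x * DSu eh x y + EE x y) + y * (y * DSv eh x y + EE x y) + y / (1 - x))%C.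
Proof.
  intros Hx Hy.
  pose proof CB_eh as Ce. pose proof CB_Bc as Cb.
  pose proof (CB_mono _ _ _ _ (le_0_n 1) Ce) as Ce1.
  pose proof (CB_n _ _ _ Ce) as Cne. pose proof (CB_m _ _ _ Ce) as Cme.
  pose proof (CB_n _ _ _ Cb) as Cnb. pose proof (CB_m _ _ _ Cb) as Cmb.
  rewrite (DSu_mul x y Hx Hy _ _ _ Ce), (DSv_mul x y Hx Hy _ _ _ Ce).
  rewrite (DSu_mul x y Hx Hy _ _ _ Cb), (DSv_mul x y Hx Hy _ _ _ Cb).
  unfold EE.
  rewrite <- (DS_plus x y Hx Hy _ _ _ _ _ Cne Cme).
  rewrite <- (DS_plus x y Hx Hy _ _ _ _ _ Cnb Cmb).
  rewrite <- (DS_plus x y Hx Hy _ _ _ _ _ Cne Ce1).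
  rewrite <- (DS_plus x y Hx Hy _ _ _ _ _ Cme Ce1).
  pose proof (CB_plus _ _ _ _ _ Cne Cme) as C1.
  pose proof (CB_plus _ _ _ _ _ Cnb Cmb) as C2.
  pose proof (CB_plus _ _ _ _ _ Cne Ce1) as C3.
  pose proof (CB_plus _ _ _ _ _ Cme Ce1) as C4.
  rewrite <- (DS_scal x y Hx Hy _ _ _ _ C1).
  rewrite <- (DS_scal x y Hx Hy _ _ _ _ C2).
  rewrite (DS_shu x y Hx Hy _ _ _ C3).
  rewrite (DS_shv x y Hx Hy _ _ _ C4).
  rewrite <- (DS_ind x y Hx).
  pose proof (CB_scal (RtoC (rho * (1 - q))) _ _ _ C2) as C5.
  pose proof (CB_shu _ _ _ C3) as C6. pose proof (CB_shv _ _ _ C4) as C7.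
  assert (C8 : CB ind1 1 1).
  { split. lra. intros n m. pose proof (one_le_pow n 1). pose proof (one_le_pow m 1).
    destruct m as [|[|m]]; simpl ind1; rewrite ?Cmod_0, ?Cmod_1; nra. }
  rewrite <- (DS_plus x y Hx Hy _ _ _ _ _ C5 C6).
  pose proof (CB_plus _ _ _ _ _ C5 C6) as C9.
  rewrite <- (DS_plus x y Hx Hy _ _ _ _ _ C9 C7).
  pose proof (CB_plus _ _ _ _ _ C9 C7) as C10.
  rewrite <- (DS_plus x y Hx Hy _ _ _ _ _ C10 C8).
  apply DS_ext. intros n m. apply coefPDE.
Qed.

Lemma main_sec (u v : C) : Cmod u < 1 -> Cmod v < 1 -> u <> RtoC 0 ->
  Ppol rho q s u <> RtoC 0 ->
  Cex_derive (fun x => Phi rho q s x v) u /\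
  Cex_derive (fun y => Phi rho q s u y) v /\
  Cplus (Cminus (CDeriv (fun x => Phi rho q s x v) u)
                (Cmult (Cmult (Cdiv (Cminus u (RtoC q)) (Ppol rho q s u))
                              (Cmult v (Cminus (RtoC 1) v)))
                       (CDeriv (fun y => Phi rho q s u y) v)))
        (calL rho q s u v) = RtoC 0 /\
  calL rho q s u v =
  Cmult (Cminus (RtoC 1) v)
    (Cminus (Cplus (Cdiv v (Cminus (RtoC 1) u))
                   (Cmult (Cplus (RtoC 1) v) (Egen rho q s (RtoC q) (Cmult u v))))
            (Cmult (Cmult v (Cminus (Cplus s (RtoC (1 + rho))) (Cmult u v)))
                   (dEv rho q s (RtoC q) (Cmult u v)))).
Proof.
  intros Hu Hv Hu0 HP.
  set (w := (u * v)%C).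
  assert (Hw : Cmod w < 1).
  { unfold w. rewrite Cmod_mult. pose proof (Cmod_ge_0 u). pose proof (Cmod_ge_0 v). nra. }
  assert (H1u : (1 - u)%C <> RtoC 0).
  { intros E. assert (u = RtoC 1) by (transitivity (1 - (1 - u))%C; [ring| rewrite E; ring]).
    subst. rewrite Cmod_1 in Hu. lra. }
  pose proof Cmod_q as Hqd.
  assert (HG : CisD (fun x => FS x (x * v)%C) u (1 * DSu Bc u w + v * DSv Bc u w)%C).
  { apply (DS_deriv' Bc _ _ (RtoC 1) (RtoC 0) v (RtoC 0) u u w _ CB_Bc); auto.
    ring. unfold w; ring. intros x. unfold FS. f_equal; ring. }
  assert (HG2 : CisD (fun y => FS u (u * y)%C) v (0 * DSu Bc u w + u * DSv Bc u w)%C).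
  { apply (DS_deriv' Bc _ _ (RtoC 0) u u (RtoC 0) v u w _ CB_Bc); auto.
    ring. unfold w; ring. intros x. unfold FS. f_equal; ring. }
  set (K1 := (s + RtoC (1 + rho + q))%C). set (K0 := (s * q + RtoC (rho + q))%C).
  assert (HPd : CisD (fun x => Ppol rho q s x) u (1 * u + u * 1 - (K1 * 1) + 0)%C).
  { unfold Ppol. fold K1 K0. apply CisD_plus. apply CisD_minus. apply CisD_mult; apply CisD_id.
    apply CisD_scal. apply CisD_id. apply CisD_const. }
  set (Pd := (1 * u + u * 1 - (K1 * 1) + 0)%C) in *.
  set (F := FS u w). set (Fu := DSu Bc u w). set (Fw := DSv Bc u w).
  assert (DPu : CisD (fun x => Phi rho q s x v) u
     ((Pd * (1 - v) + Ppol rho q s u * 0) * F + (Ppol rho q s u * (1 - v)) * (1 * Fu + v * Fw))%C).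
  { apply (CisD_ext_loc (fun x => (Ppol rho q s x * (1 - v)) * FS x (x * v))%C _ _ _ (1 - Cmod u)). lra.
    intros x Hx. pose proof (ball_in_D u Hu x Hx) as Hx1.
    unfold Phi. rewrite Ffun_eq; auto. rewrite Cmod_mult. pose proof (Cmod_ge_0 x). pose proof (Cmod_ge_0 v). nra.
    eapply CisD_eq. apply CisD_mult. apply CisD_mult. exact HPd. apply CisD_const. exact HG. cbv beta. unfold Fu, Fw. fold w F. ring. }
  assert (DPv : CisD (fun y => Phi rho q s u y) v
     ((0 * (1 - v) + Ppol rho q s u * (0 - 1)) * F + (Ppol rho q s u * (1 - v)) * (0 * Fu + u * Fw))%C).
  { apply (CisD_ext_loc (fun y => (Ppol rho q s u * (1 - y)) * FS u (u * y))%C _ _ _ (1 - Cmod v)). lra.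
    intros y Hy. pose proof (ball_in_D v Hv y Hy) as Hy1.
    unfold Phi. rewrite Ffun_eq; auto. rewrite Cmod_mult. pose proof (Cmod_ge_0 y). pose proof (Cmod_ge_0 u). nra.
    eapply CisD_eq. apply CisD_mult. apply CisD_mult. apply CisD_const. apply CisD_minus. apply CisD_const. apply CisD_id.
    exact HG2. cbv beta. unfold Fu, Fw. fold w F. ring. }
  assert (HcalL : calL rho q s u v =
    Cmult (Cminus (RtoC 1) v)
    (Cminus (Cplus (Cdiv v (Cminus (RtoC 1) u))
                   (Cmult (Cplus (RtoC 1) v) (Egen rho q s (RtoC q) (Cmult u v))))
            (Cmult (Cmult v (Cminus (Cplus s (RtoC (1 + rho))) (Cmult u v)))
                   (dEv rho q s (RtoC q) (Cmult u v))))).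
  { unfold calL, Lfun. field. auto. }
  split. exact (ex_intro _ _ DPu).
  split. exact (ex_intro _ _ DPv).
  split. 2: exact HcalL.
  rewrite (CDeriv_correct _ _ _ DPu), (CDeriv_correct _ _ _ DPv).
  rewrite HcalL. fold w.
  set (E := EE u w). set (Eu := DSu eh u w). set (Ew := DSv eh u w).
  set (E0 := EE q w). set (E0' := DSv eh q w).
  assert (HE0 : Egen rho q s (RtoC q) w = E0) by (apply Egen_eq; auto).
  assert (HdE : dEv rho q s (RtoC q) w = E0').
  { unfold dEv. apply CDeriv_correct.
    apply (CisD_ext_loc (fun y => EE q y) _ _ _ (1 - Cmod w)). lra.
    intros y Hy. symmetry. apply Egen_eq; auto. apply (ball_in_D w Hw y Hy).
    eapply CisD_eq. apply (DS_deriv' eh _ _ (RtoC 0) (RtoC q) (RtoC 1) (RtoC 0) w q w _ CB_eh); auto.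
    ring. ring. intros y. unfold EE. f_equal; ring. unfold E0'. ring. }
  rewrite HE0, HdE.
  assert (KR : ((u - q) * F)%C = (E - E0)%C) by (apply KeyRel; auto).
  assert (REu : Eu = (F + (u - q) * Fu)%C).
  { assert (D1 : CisD (fun x => EE x w) u (1 * Eu + 0 * Ew)%C).
    { apply (DS_deriv' eh _ _ (RtoC 1) (RtoC 0) (RtoC 0) w u u w _ CB_eh); auto.
      ring. ring. intros x. unfold EE. f_equal; ring. }
    assert (HFx : CisD (fun x => FS x w) u (1 * Fu + 0 * Fw)%C).
    { apply (DS_deriv' Bc _ _ (RtoC 1) (RtoC 0) (RtoC 0) w u u w _ CB_Bc); auto.
      ring. ring. intros x. unfold FS. f_equal; ring. }
    assert (D2' : CisD (fun x => EE x w) u ((1 - 0) * F + (u - q) * (1 * Fu + 0 * Fw) + 0)%C).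
    { apply (CisD_ext_loc (fun x => (x - q) * FS x w + EE q w)%C _ _ _ (1 - Cmod u)). lra.
      intros x Hx. pose proof (ball_in_D u Hu x Hx) as Hx1. rewrite KeyRel; auto. ring.
      eapply CisD_eq. apply CisD_plus. apply CisD_mult. apply CisD_minus. apply CisD_id. apply CisD_const. exact HFx.
      apply CisD_const. cbv beta. unfold F, Fu, Fw. ring. }
    pose proof (CisD_unique _ _ _ _ D1 D2') as U. 
    transitivity (1 * Eu + 0 * Ew)%C. ring. rewrite U. ring. }
  assert (REw : Ew = ((u - q) * Fw + E0')%C).
  { assert (D1 : CisD (fun y => EE u y) w (0 * Eu + 1 * Ew)%C).
    { apply (DS_deriv' eh _ _ (RtoC 0) u (RtoC 1) (RtoC 0) w u w _ CB_eh); auto.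
      ring. ring. intros y. unfold EE. f_equal; ring. }
    assert (HFy : CisD (fun y => FS u y) w (0 * Fu + 1 * Fw)%C).
    { apply (DS_deriv' Bc _ _ (RtoC 0) u (RtoC 1) (RtoC 0) w u w _ CB_Bc); auto.
      ring. ring. intros y. unfold FS. f_equal; ring. }
    assert (HEy : CisD (fun y => EE q y) w (0 * DSu eh q w + 1 * E0')%C).
    { apply (DS_deriv' eh _ _ (RtoC 0) (RtoC q) (RtoC 1) (RtoC 0) w q w _ CB_eh); auto.
      ring. ring. intros y. unfold EE. f_equal; ring. }
    assert (D2' : CisD (fun y => EE u y) w ((u - q) * (0 * Fu + 1 * Fw) + (0 * DSu eh q w + 1 * E0'))%C).
    { apply (CisD_ext_loc (fun y => (u - q) * FS u y + EE q y)%C _ _ _ (1 - Cmod w)). lra.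
      intros y Hy. pose proof (ball_in_D w Hw y Hy) as Hy1. rewrite KeyRel; auto. ring.
      eapply CisD_eq. apply CisD_plus. apply CisD_scal. exact HFy. exact HEy. cbv beta. unfold Fu, Fw. ring. }
    pose proof (CisD_unique _ _ _ _ D1 D2') as U.
    transitivity (0 * Eu + 1 * Ew)%C. ring. rewrite U. ring. }
  pose proof (PDE_E u w Hu Hw) as PD. fold E Eu Ew Fu Fw in PD.
  rewrite REu, REw in PD.
  assert (HE : E = ((u - q) * F + E0)%C) by (rewrite KR; ring).
  rewrite HE in PD.
  unfold Pd, K1. unfold w in *. 
  unfold Ppol in *.
  clear -PD HP Hu0 H1u.
  rewrite ?RtoC_plus, ?RtoC_mult, ?RtoC_minus in *.
  match type of PD with ?L = ?R =>
    transitivity (Copp (1 - v) / u * (L - R))%C; [| rewrite PD; ring] end.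
  field. repeat split; auto.
Qed.

End Main.


Theorem mainTheorem5 (rho q : R) (s : C) :
  0 < rho -> 0 < q -> q < 1 -> rho + q < 1 -> 0 <= Re s ->
  forall u v : C, inD u -> inD v -> u <> RtoC 0 ->
  Ppol rho q s u <> RtoC 0 ->
  Cex_derive (fun x => Phi rho q s x v) u /\
  Cex_derive (fun y => Phi rho q s u y) v /\
  Cplus (Cminus (CDeriv (fun x => Phi rho q s x v) u)
                (Cmult (Cmult (Cdiv (Cminus u (RtoC q)) (Ppol rho q s u))
                              (Cmult v (Cminus (RtoC 1) v)))
                       (CDeriv (fun y => Phi rho q s u y) v)))
        (calL rho q s u v) = RtoC 0 /\
  calL rho q s u v =
  Cmult (Cminus (RtoC 1) v)
    (Cminus (Cplus (Cdiv v (Cminus (RtoC 1) u))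
                   (Cmult (Cplus (RtoC 1) v) (Egen rho q s (RtoC q) (Cmult u v))))
            (Cmult (Cmult v (Cminus (Cplus s (RtoC (1 + rho))) (Cmult u v)))
                   (dEv rho q s (RtoC q) (Cmult u v)))).
Proof.
  intros Hrho Hq0 Hq1 Hrq Hs u v Hu Hv Hu0 HP.
  assert (Hq : 0 < q < 1) by lra.
  exact (main_sec rho q s Hrho Hq Hs u v Hu Hv Hu0 HP).
Qed.
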